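(* Let $\psi\in\mathcal{C}(\mathbb{X})$ be such that $\psi_\Omega$ belongs to $\mathcal{C}^1(SE(2))$ and is supported in $\mathbb{D}_{1/4}^\circ$, where $\psi_\Omega(\mathbf{g})=\psi(\mathbb{L}\mathbf{g})$ for $\mathbf{g}\in\Omega$ and $\psi_\Omega(\mathbf{g})=0$ otherwise. Let $\rho\in\mathcal{C}^1(SE(2))$ be supported in $\mathbb{D}_{1/4}$ and radial in translations. Then there is a constant $C>0$ (depending only on $\psi,\rho$) such that for all $\mathbf{K}\in\mathbb{N}^3$ and all $\mathbf{k}\in\mathbb{Z}^3$ with $|\mathbf{k}|\le\mathbf{K}$, \[ \left|\widehat{\psi\oslash\rho}\{\mathbf{k};2\mathbf{K}+1\}-\widehat{\psi}\{\mathbf{k};2\mathbf{K}+1\}\,\widehat{\rho}[\mathbf{k};2\mathbf{K}+1]\right|\le\frac{C}{\min(\mathbf{K})}. \]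
   Context: $SE(2)=\mathbb{R}^2\rtimes SO(2)$ with group law $(\mathbf{x},\mathbf{R})\circ(\mathbf{x}',\mathbf{R}')=(\mathbf{x}+\mathbf{R}\mathbf{x}',\mathbf{R}\mathbf{R}')$, elements parametrized by $(x,y,\theta)\in\mathbb{R}^2\times[0,2\pi)$, Haar measure $\frac{1}{2\pi}\mathrm{d}x\,\mathrm{d}y\,\mathrm{d}\theta$. $\mathbb{L}=\{(\boldsymbol{\ell},\mathbf{I}):\boldsymbol{\ell}\in\mathbb{Z}^2\}$, $\mathbb{X}=\mathbb{L}\backslash SE(2)$, $\mu$ its normalized invariant measure. $\Omega=[-\tfrac12,\tfrac12)^2\times SO(2)$. For $\psi\in L^1(\mathbb{X},\mu)$, $g\in L^1(SE(2))$: $(\psi\oslash g)(\mathbb{L}\mathbf{g})=\int_{SE(2)}\psi(\mathbb{L}\mathbf{h})g(\mathbf{h}^{-1}\circ\mathbf{g})\,\mathrm{d}\mathbf{h}$. $\mathcal{C}^1(SE(2))$: continuously differentiable in $(x,y,\theta)$, $2\pi$-periodic in $\theta$. $\mathbb{D}_a=\{(\mathbf{x},\mathbf{R}):\|\mathbf{x}\|_2\le a\}$, $\mathbb{D}_a^\circ=\{(\mathbf{x},\mathbf{R}):\|\mathbf{x}\|_2<a\}$. $\rho$ radial in translations: $\rho(\mathbf{x},\mathbf{R})=\rho(\mathbf{S}\mathbf{x},\mathbf{R})$ for all $\mathbf{x}$, $\mathbf{R},\mathbf{S}\in SO(2)$. For $\mathbf{k}\in\mathbb{Z}^3$, $\phi_{\mathbf{k}}(x,y,\theta)=e^{2\pi\mathrm{i}(k_1x+k_2y)}e^{\mathrm{i}k_3\theta}$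 and $\varphi_{\mathbf{k}}(\mathbb{L}(x,y,\theta))=\phi_{\mathbf{k}}(x,y,\theta)$. For $\mathbf{L}=(L_{\mathrm x},L_{\mathrm y},L_{\mathrm r})\in\mathbb{N}^3$, grid points $x_i=-\tfrac12+\tfrac{i-1}{L_{\mathrm x}}$, $y_j=-\tfrac12+\tfrac{j-1}{L_{\mathrm y}}$, $\theta_l=\tfrac{2\pi(l-1)}{L_{\mathrm r}}$; for $\chi:\mathbb{X}\to\mathbb{C}$, $\widehat{\chi}\{\mathbf{k};\mathbf{L}\}=\frac{1}{L_{\mathrm x}L_{\mathrm y}L_{\mathrm r}}\sum_{i,j,l}\chi(\mathbb{L}(x_i,y_j,\theta_l))\overline{\varphi_{\mathbf{k}}(\mathbb{L}(x_i,y_j,\theta_l))}$, and for $g$ on $SE(2)$, $\widehat{g}[\mathbf{k};\mathbf{L}]=\frac{1}{L_{\mathrm x}L_{\mathrm y}L_{\mathrm r}}\sum_{i,j,l}g(x_i,y_j,\theta_l)\overline{\phi_{\mathbf{k}}(x_i,y_j,\theta_l)}$. For $\mathbf{K}\in\mathbb{N}^3$: $2\mathbf{K}+1$ componentwise, $\min(\mathbf{K})$ smallest entry, $|\mathbf{k}|\le\mathbf{K}$ componentwise. *)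

(* Defs.v *)
From Stdlib Require Import Reals.
From Coquelicot Require Import Coquelicot.
Open Scope R_scope.

(* Elements of SE(2) in coordinates (x, y, theta): ((x, y), theta). *)
Definition SE2 := (R * R * R)%type.
Definition px (g : SE2) : R := fst (fst g).
Definition py (g : SE2) : R := snd (fst g).
Definition pt (g : SE2) : R := snd g.

(* A function on X = L \ SE(2) is represented by its lift to SE(2), i.e. a
   function of (x,y,theta) that is Z^2-periodic in translations and
   2pi-periodic in theta (group elements (x, R_theta)). *)
Definition on_X (psi : SE2 -> C) : Prop :=
  (forall (l1 l2 : Z) x y t, psi (x + IZR l1, y + IZR l2, t) = psi (x, y, t)) /\
  (forall x y t, psi (x, y, t + 2 * PI) = psi (x, y, t)).

(* psi in C(X): continuity on the quotient = continuity of the lift. *)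
Definition cont_X (psi : SE2 -> C) : Prop :=
  on_X psi /\ forall g : SE2, continuous psi g.

Definition C1_SE2 (f : SE2 -> C) : Prop :=
  (forall x y t, f (x, y, t + 2 * PI) = f (x, y, t)) /\
  exists fx fy ft : SE2 -> C,
    (forall x y t, @is_derive R_AbsRing C_R_NormedModule
                     (fun s => f (s, y, t)) x (fx (x, y, t))) /\
    (forall x y t, @is_derive R_AbsRing C_R_NormedModule
                     (fun s => f (x, s, t)) y (fy (x, y, t))) /\
    (forall x y t, @is_derive R_AbsRing C_R_NormedModule
                     (fun s => f (x, y, s)) t (ft (x, y, t))) /\
    (forall g, continuous fx g) /\ (forall g, continuous fy g) /\
    (forall g, continuous ft g).

Definition Dcl (a : R) (g : SE2) : Prop := sqrt (px g ^ 2 + py g ^ 2) <= a.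
Definition Dop (a : R) (g : SE2) : Prop := sqrt (px g ^ 2 + py g ^ 2) < a.

(* supp f ⊆ A, where supp f is the closure of {f <> 0}: every point outside A
   has a neighbourhood on which f vanishes. *)
Definition supported_in (f : SE2 -> C) (A : SE2 -> Prop) : Prop :=
  forall g, ~ A g -> locally g (fun q => f q = 0%C).

Definition radial (rho : SE2 -> C) : Prop :=
  forall x y t phi,
    rho (cos phi * x - sin phi * y, sin phi * x + cos phi * y, t) = rho (x, y, t).

Definition psiOmega (psi : SE2 -> C) (g : SE2) : C :=
  if Rle_dec (-/2) (px g) then
   if Rlt_dec (px g) (/2) then
    if Rle_dec (-/2) (py g) then
     if Rlt_dec (py g) (/2) then psi g else 0%C
    else 0%C
   else 0%C
  else 0%C.

(* h^{-1} o g for h = (u,v,s), g = (x,y,t):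
   (R_s^{-1} (x-u, y-v), theta = t - s). *)
Definition se2_inv_mul (h g : SE2) : SE2 :=
  let a := px g - px h in
  let b := py g - py h in
  let s := pt h in
  (cos s * a + sin s * b, - sin s * a + cos s * b, pt g - pt h).

(* Integral over SE(2) w.r.t. the Haar measure (1/2pi) dx dy dtheta. *)
Definition int_SE2 (F : SE2 -> C) : C :=
  scal (/ (2 * PI))
   (@RInt_gen C_R_CompleteNormedModule (fun u =>
      @RInt_gen C_R_CompleteNormedModule (fun v =>
         @RInt C_R_CompleteNormedModule (fun s => F (u, v, s)) 0 (2 * PI))
       (Rbar_locally m_infty) (Rbar_locally p_infty))
     (Rbar_locally m_infty) (Rbar_locally p_infty)).

(* (psi ⊘ g)(L g) = ∫ psi(L h) g(h^{-1} o g) dh, written on representatives. *)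
Definition conv (psi rho : SE2 -> C) (g : SE2) : C :=
  int_SE2 (fun h => Cmult (psi h) (rho (se2_inv_mul h g))).

Definition cexpi (a : R) : C := (cos a, sin a).

Definition phik (k : Z * Z * Z) (g : SE2) : C :=
  Cmult (cexpi (2 * PI * (IZR (fst (fst k)) * px g + IZR (snd (fst k)) * py g)))
        (cexpi (IZR (snd k) * pt g)).

(* Discrete Fourier coefficient on the grid
   x_i = -1/2 + (i-1)/Lx, y_j = -1/2 + (j-1)/Ly, theta_l = 2pi(l-1)/Lr;
   the same formula defines both  chi^{k;L} (on X) and g^[k;L] (on SE(2)). *)
Definition dft (f : SE2 -> C) (k : Z * Z * Z) (L : nat * nat * nat) : C :=
  let Lx := fst (fst L) in let Ly := snd (fst L) in let Lr := snd L in
  scal (/ (INR Lx * INR Ly * INR Lr))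
   (sum_n_m (fun i =>
     sum_n_m (fun j =>
      sum_n_m (fun l =>
        let g : SE2 := (- / 2 + INR (i - 1) / INR Lx,
                        - / 2 + INR (j - 1) / INR Ly,
                        2 * PI * INR (l - 1) / INR Lr) in
        Cmult (f g) (Cconj (phik k g))) 1 Lr) 1 Ly) 1 Lx).

(* Main.v *)
Require Import Defs.
From Stdlib Require Import Reals Lra Lia ZArith.
From Coquelicot Require Import Coquelicot.
From Stdlib Require Import Classical ClassicalEpsilon FunctionalExtensionality.
Open Scope R_scope.

Lemma scal_C (r : R) (z : C) : scal r z = Cmult (RtoC r) z.
Proof.
  destruct z as [a b]. unfold Cmult, RtoC; simpl.
  apply injective_projections; simpl; unfold scal; simpl; unfold mult; simpl; ring.
Qed.

Lemma plus_C (a b : C) : plus a b = Cplus a b.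
Proof. reflexivity. Qed.
Lemma minus_C (a b : C) : minus a b = Cminus a b.
Proof. reflexivity. Qed.
Lemma zero_C : (zero : C) = RtoC 0.
Proof. reflexivity. Qed.

Fixpoint sC (n : nat) (F : nat -> C) : C :=
  match n with O => RtoC 0 | S m => Cplus (sC m F) (F m) end.

Lemma sum_n_m_sC (F : nat -> C) (L : nat) :
  sum_n_m F 1 L = sC L (fun j => F (S j)).
Proof.
  induction L.
  - rewrite sum_n_m_zero; [reflexivity | lia].
  - rewrite sum_n_Sm by lia. rewrite IHL. reflexivity.
Qed.

Lemma sC_ext n F G : (forall i, (i < n)%nat -> F i = G i) -> sC n F = sC n G.
Proof.
  induction n; intros H; simpl; auto.
  rewrite IHn by (intros; apply H; lia). rewrite H by lia. reflexivity.
Qed.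

Lemma sC_plus n F G : sC n (fun i => Cplus (F i) (G i)) = Cplus (sC n F) (sC n G).
Proof. induction n; simpl. ring. rewrite IHn. ring. Qed.

Lemma sC_minus n F G : sC n (fun i => Cminus (F i) (G i)) = Cminus (sC n F) (sC n G).
Proof. induction n; simpl. ring. rewrite IHn. ring. Qed.

Lemma sC_mul_l n c F : sC n (fun i => Cmult c (F i)) = Cmult c (sC n F).
Proof. induction n; simpl. ring. rewrite IHn. ring. Qed.

Lemma sC_mul_r n c F : sC n (fun i => Cmult (F i) c) = Cmult (sC n F) c.
Proof. induction n; simpl. ring. rewrite IHn. ring. Qed.

Lemma sC_swap n m (F : nat -> nat -> C) :
  sC n (fun i => sC m (fun j => F i j)) = sC m (fun j => sC n (fun i => F i j)).
Proof.
  induction n; simpl.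
  - induction m; simpl; auto. rewrite <- IHm. ring.
  - rewrite IHn. rewrite <- sC_plus. reflexivity.
Qed.

Lemma sC_front n F : sC (S n) F = Cplus (F O) (sC n (fun i => F (S i))).
Proof.
  induction n; simpl. ring. simpl in IHn. rewrite IHn. ring.
Qed.

Lemma sC_norm n F M : (forall i, (i < n)%nat -> Cmod (F i) <= M) -> Cmod (sC n F) <= INR n * M.
Proof.
  induction n; intros H; cbn [sC].
  - rewrite Cmod_0. simpl. lra.
  - eapply Rle_trans. apply Cmod_triangle.
    rewrite S_INR. specialize (IHn (fun i Hi => H i ltac:(lia))). specialize (H n ltac:(lia)). lra.
Qed.

Lemma sC_prod n m F G :
  Cmult (sC n F) (sC m G) = sC n (fun i => sC m (fun j => Cmult (F i) (G j))).
Proof.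
  rewrite <- sC_mul_r. apply sC_ext. intros. rewrite <- sC_mul_l. reflexivity.
Qed.

Lemma sC_shift1 (L : nat) (phi : R -> C) r :
  (1 <= L)%nat -> (forall x, phi (x + INR L) = phi x) ->
  sC L (fun a => phi (INR a + r - 1)) = sC L (fun a => phi (INR a + r)).
Proof.
  intros HL Hp. destruct L as [|L]; [lia|].
  rewrite sC_front. cbn [sC].
  assert (E : phi (INR 0 + r - 1) = phi (INR L + r)).
  { rewrite <- (Hp (INR 0 + r - 1)). f_equal. rewrite S_INR. simpl. ring. }
  rewrite E. rewrite Cplus_comm. f_equal.
  apply sC_ext. intros i _. f_equal. rewrite S_INR. ring.
Qed.

Lemma sC_shift (L : nat) (phi : R -> C) r j :
  (1 <= L)%nat -> (forall x, phi (x + INR L) = phi x) ->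
  sC L (fun a => phi (INR a + r - INR j)) = sC L (fun a => phi (INR a + r)).
Proof.
  intros HL Hp. induction j.
  - apply sC_ext. intros. f_equal. simpl. ring.
  - rewrite <- IHj.
    transitivity (sC L (fun a => phi (INR a + (r - INR j)))).
    2:{ apply sC_ext. intros. f_equal. ring. }
    rewrite <- (sC_shift1 L phi (r - INR j)) by auto.
    apply sC_ext. intros. f_equal. rewrite S_INR. ring.
    
Qed.
Definition gx (L i : nat) : R := - / 2 + INR i / INR L.
Definition gt (L l : nat) : R := 2 * PI * INR l / INR L.
Definition Ef (k : Z * Z * Z) (g : SE2) : C := Cconj (phik k g).

Lemma dft_sC f k L1 L2 L3 :
  dft f k (L1, L2, L3) = scal (/ (INR L1 * INR L2 * INR L3))
    (sC L1 (fun i => sC L2 (fun j => sC L3 (fun l =>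
       Cmult (f (gx L1 i, gx L2 j, gt L3 l)) (Ef k (gx L1 i, gx L2 j, gt L3 l)))))).
Proof.
  unfold dft. simpl fst; simpl snd. f_equal.
  rewrite sum_n_m_sC. apply sC_ext; intros i _.
  rewrite sum_n_m_sC. apply sC_ext; intros j _.
  rewrite sum_n_m_sC. apply sC_ext; intros l _.
  unfold gx, gt, Ef. replace (S i - 1)%nat with i by lia.
  replace (S j - 1)%nat with j by lia. replace (S l - 1)%nat with l by lia. reflexivity.
Qed.

Lemma cexpi_add a b : cexpi (a + b) = Cmult (cexpi a) (cexpi b).
Proof.
  unfold cexpi, Cmult. simpl. rewrite cos_plus, sin_plus.
  apply injective_projections; simpl; ring.
Qed.

Lemma Cmod_cexpi a : Cmod (cexpi a) = 1.
Proof.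
  pose proof (sin2_cos2 a). unfold Rsqr in H.
  assert (H0 : cos a ^ 2 + sin a ^ 2 = 1) by nra.
  unfold cexpi, Cmod. simpl fst; simpl snd. rewrite H0. apply sqrt_1.
Qed.

Lemma cexpi_period_nat a (n : nat) : cexpi (a + 2 * PI * INR n) = cexpi a.
Proof.
  unfold cexpi. replace (a + 2 * PI * INR n) with (a + 2 * INR n * PI) by ring.
  rewrite cos_period, sin_period. reflexivity.
Qed.

Lemma cexpi_period a (z : Z) : cexpi (a + 2 * PI * IZR z) = cexpi a.
Proof.
  destruct (Z.le_gt_cases 0 z) as [Hz|Hz].
  - rewrite <- (Z2Nat.id z Hz). rewrite <- INR_IZR_INZ. apply cexpi_period_nat.
  - assert (Hz' : (0 <= - z)%Z) by lia.
    rewrite <- (cexpi_period_nat (a + 2 * PI * IZR z) (Z.to_nat (- z))).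
    f_equal. rewrite INR_IZR_INZ, Z2Nat.id by lia. rewrite opp_IZR. ring.
Qed.

Lemma Cconj_cexpi a : Cconj (cexpi a) = cexpi (- a).
Proof.
  unfold cexpi, Cconj. simpl. rewrite cos_neg, sin_neg. reflexivity.
Qed.

Lemma Ef_mult k x1 y1 t1 x2 y2 t2 :
  Ef k (x1 + x2, y1 + y2, t1 + t2) = Cmult (Ef k (x1, y1, t1)) (Ef k (x2, y2, t2)).
Proof.
  unfold Ef, phik, px, py, pt. simpl. rewrite !Cmult_conj.
  replace (2 * PI * (IZR (fst (fst k)) * (x1 + x2) + IZR (snd (fst k)) * (y1 + y2)))
    with (2 * PI * (IZR (fst (fst k)) * x1 + IZR (snd (fst k)) * y1) +
          2 * PI * (IZR (fst (fst k)) * x2 + IZR (snd (fst k)) * y2)) by ring.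
  replace (IZR (snd k) * (t1 + t2)) with (IZR (snd k) * t1 + IZR (snd k) * t2) by ring.
  rewrite !cexpi_add. rewrite !Cmult_conj. ring.
Qed.

Lemma Cmod_Ef k g : Cmod (Ef k g) = 1.
Proof.
  unfold Ef, phik. rewrite Cmod_conj, Cmod_mult, !Cmod_cexpi. ring.
Qed.

Lemma Ef_perx k x y t (z : Z) : Ef k (x + IZR z, y, t) = Ef k (x, y, t).
Proof.
  unfold Ef, phik, px, py, pt; cbn [fst snd]. f_equal. f_equal.
  match goal with |- cexpi ?a = cexpi ?b => replace a with (b + 2 * PI * IZR (fst (fst k) * z)) by (rewrite mult_IZR; ring) end.
  apply cexpi_period.
Qed.

Lemma Ef_pery k x y t (z : Z) : Ef k (x, y + IZR z, t) = Ef k (x, y, t).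
Proof.
  unfold Ef, phik, px, py, pt; cbn [fst snd]. f_equal. f_equal.
  match goal with |- cexpi ?a = cexpi ?b => replace a with (b + 2 * PI * IZR (snd (fst k) * z)) by (rewrite mult_IZR; ring) end.
  apply cexpi_period.
Qed.

Lemma Ef_pert k x y t : Ef k (x, y, t + 2 * PI) = Ef k (x, y, t).
Proof.
  unfold Ef, phik, px, py, pt; cbn [fst snd]. f_equal. f_equal.
  match goal with |- cexpi ?a = cexpi ?b => replace a with (b + 2 * PI * IZR (snd k)) by ring end.
  apply cexpi_period.
Qed.

Lemma Cmod_le_sum (z : C) : Cmod z <= Rabs (fst z) + Rabs (snd z).
Proof.
  destruct z as [a b]; unfold Cmod; simpl fst; simpl snd.
  pose proof (Rabs_pos a); pose proof (Rabs_pos b).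
  rewrite <- (sqrt_square (Rabs a + Rabs b)) by lra.
  apply sqrt_le_1_alt.
  replace (a ^ 2) with (Rabs a * Rabs a) by (rewrite <- Rabs_mult, Rabs_right; [ring|nra]).
  replace (b ^ 2) with (Rabs b * Rabs b) by (rewrite <- Rabs_mult, Rabs_right; [ring|nra]).
  nra.
Qed.

Lemma ball_C_Cmod (z w : C) e : ball z e w -> Cmod (Cminus w z) < 2 * e.
Proof.
  intros [H1 H2]. eapply Rle_lt_trans. apply Cmod_le_sum.
  destruct z, w. simpl in *. unfold ball in H1, H2; simpl in H1, H2.
  unfold AbsRing_ball, abs, minus, plus, opp in H1, H2; simpl in H1, H2. lra.
Qed.

Lemma lip_cont (g : R -> C) M :
  (forall x y, Cmod (Cminus (g y) (g x)) <= M * Rabs (y - x)) -> forall x, continuous g x.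
Proof.
  intros H x. unfold continuous. apply filterlim_locally. intros eps.
  assert (HM : 0 < Rabs M + 1) by (pose proof (Rabs_pos M); lra).
  assert (Hd : 0 < eps / (Rabs M + 1)) by (apply Rdiv_lt_0_compat; [apply cond_pos|lra]).
  exists (mkposreal _ Hd). intros y Hy. apply (@norm_compat1 R_AbsRing C_R_NormedModule).
  rewrite <- Cmod_norm. simpl in Hy. change (Rabs (y - x) < eps / (Rabs M + 1)) in Hy.
  change (Cmod (Cminus (g y) (g x)) < eps).
  eapply Rle_lt_trans. apply H.
  pose proof (Rabs_pos (y - x)). pose proof (Rle_abs M). pose proof (cond_pos eps).
  apply Rle_lt_trans with ((Rabs M + 1) * Rabs (y - x)). nra.
  replace (pos eps) with ((Rabs M + 1) * (eps / (Rabs M + 1))) by (field; lra).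
  apply Rmult_lt_compat_l; lra.
Qed.

Lemma cont_slice_x (F : SE2 -> C) y t x :
  continuous F (x, y, t) -> continuous (fun s => F (s, y, t)) x.
Proof.
  intros H. unfold continuous in *.
  apply (filterlim_comp _ _ _ (fun s => (s, y, t)) F _ (locally (x, y, t))); auto.
  apply filterlim_locally. intros eps. exists eps. intros s Hs.
  repeat split; auto; apply ball_center.
Qed.

Lemma cont_slice_y (F : SE2 -> C) x t y :
  continuous F (x, y, t) -> continuous (fun s => F (x, s, t)) y.
Proof.
  intros H. unfold continuous in *.
  apply (filterlim_comp _ _ _ (fun s => (x, s, t)) F _ (locally (x, y, t))); auto.
  apply filterlim_locally. intros eps. exists eps. intros s Hs.
  repeat split; auto; apply ball_center.
Qed.

Lemma cont_slice_t (F : SE2 -> C) x y t :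
  continuous F (x, y, t) -> continuous (fun s => F (x, y, s)) t.
Proof.
  intros H. unfold continuous in *.
  apply (filterlim_comp _ _ _ (fun s => (x, y, s)) F _ (locally (x, y, t))); auto.
  apply filterlim_locally. intros eps. exists eps. intros s Hs.
  repeat split; auto; apply ball_center.
Qed.

Lemma ftc_lip (f df : R -> C) a b M :
  (forall x, @is_derive R_AbsRing C_R_NormedModule f x (df x)) ->
  (forall x, continuous df x) ->
  (forall x, Rmin a b <= x <= Rmax a b -> Cmod (df x) <= M) ->
  Cmod (Cminus (f b) (f a)) <= M * Rabs (b - a).
Proof.
  intros Hd Hc HM.
  assert (gen : forall a b, a <= b -> (forall x, a <= x <= b -> Cmod (df x) <= M) ->
            Cmod (Cminus (f b) (f a)) <= M * Rabs (b - a)).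
  { clear a b HM. intros a b Hab HM.
    pose proof (@is_RInt_derive C_R_CompleteNormedModule f df a b
                 (fun x _ => Hd x) (fun x _ => Hc x)) as HI.
    pose proof (norm_RInt_le_const df a b (minus (f b) (f a)) M Hab) as HN.
    rewrite Rabs_right by lra.
    rewrite Cmod_norm. rewrite Rmult_comm. apply HN.
    - intros x Hx. rewrite <- Cmod_norm. apply HM. auto.
    - exact HI. }
  destruct (Rle_dec a b).
  - apply gen; auto. intros; apply HM. rewrite Rmin_left, Rmax_right; lra.
  - rewrite <- Cmod_opp. replace (Copp (Cminus (f b) (f a))) with (Cminus (f a) (f b)) by ring.
    rewrite Rabs_minus_sym. apply gen; [lra|]. intros; apply HM.
    rewrite Rmin_right, Rmax_left; lra.
Qed.

Definition toSE (p : Compactness.Tn 3 R) : SE2 :=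
  (fst p, fst (snd p), fst (snd (snd p))).

Lemma fold_max_in (l : list (Compactness.Tn 3 R)) (h : Compactness.Tn 3 R -> R) t :
  List.In t l -> h t <= List.fold_right Rmax 0 (List.map h l).
Proof.
  induction l; simpl; [tauto|]. intros [->|Hi].
  - apply Rmax_l.
  - eapply Rle_trans. apply IHl; auto. apply Rmax_r.
Qed.

Lemma fold_max_pos (l : list (Compactness.Tn 3 R)) (h : Compactness.Tn 3 R -> R) :
  0 <= List.fold_right Rmax 0 (List.map h l).
Proof.
  induction l; simpl. lra. eapply Rle_trans. apply IHl. apply Rmax_r.
Qed.

Lemma box_bound (F : SE2 -> C) a1 b1 a2 b2 a3 b3 :
  (forall p, continuous F p) ->
  exists M, 0 <= M /\ forall x y t, a1 <= x <= b1 -> a2 <= y <= b2 -> a3 <= t <= b3 ->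
     Cmod (F (x, y, t)) <= M.
Proof.
  intros Hc.
  assert (Hd : forall p : Compactness.Tn 3 R, exists d : posreal, forall q : Compactness.Tn 3 R,
     Compactness.close_n 3 d q p -> Cmod (Cminus (F (toSE q)) (F (toSE p))) < 2).
  { intros p. specialize (Hc (toSE p)). unfold continuous in Hc.
    apply filterlim_locally with (eps := mkposreal 1 Rlt_0_1) in Hc.
    destruct Hc as [d Hd]. exists d. intros q Hq.
    destruct p as [p1 [p2 [p3 []]]]. destruct q as [q1 [q2 [q3 []]]].
    simpl in Hq. destruct Hq as [H1 [H2 [H3 _]]].
    replace 2 with (2 * 1) by ring. apply ball_C_Cmod. apply Hd.
    unfold toSE; simpl. repeat split; assumption. }
  set (delta := fun p => proj1_sig (constructive_indefinite_description _ (Hd p))).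
  apply NNPP. intros Hn.
  apply (Compactness.compactness_list 3 (a1, (a2, (a3, tt))) (b1, (b2, (b3, tt))) delta).
  intros [l Hl]. apply Hn.
  exists (2 + List.fold_right Rmax 0 (List.map (fun t => Cmod (F (toSE t))) l)).
  split. pose proof (fold_max_pos l (fun t => Cmod (F (toSE t)))). lra.
  intros x y t Hx Hy Ht.
  destruct (Hl (x, (y, (t, tt)))) as [p [Hin [_ Hcl]]].
  { simpl. tauto. }
  pose proof (proj2_sig (constructive_indefinite_description _ (Hd p)) (x, (y, (t, tt)))) as Hq.
  fold (delta p) in Hq. specialize (Hq Hcl).
  pose proof (fold_max_in l (fun t => Cmod (F (toSE t))) p Hin) as H. cbv beta in H.
  change (F (x, y, t)) with (F (toSE (x, (y, (t, tt))))).
  replace (F (toSE (x, (y, (t, tt))))) with (Cplus (Cminus (F (toSE (x, (y, (t, tt))))) (F (toSE p))) (F (toSE p))) by ring.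
  eapply Rle_trans. apply Cmod_triangle. lra.
Qed.

Definition vanish (f : SE2 -> C) : Prop :=
  forall x y t, / 4 < Rabs x \/ / 4 < Rabs y -> f (x, y, t) = RtoC 0.

Lemma per_nat (f : SE2 -> C) :
  (forall x y t, f (x, y, t + 2 * PI) = f (x, y, t)) ->
  forall x y t (n : nat), f (x, y, t + 2 * PI * INR n) = f (x, y, t).
Proof.
  intros Hp x y t n. induction n.
  - f_equal. simpl. f_equal. ring.
  - rewrite <- IHn, <- (Hp x y (t + 2 * PI * INR n)). f_equal. f_equal. rewrite S_INR. ring.
Qed.

Lemma per_int (f : SE2 -> C) :
  (forall x y t, f (x, y, t + 2 * PI) = f (x, y, t)) ->
  forall x y t (z : Z), f (x, y, t + 2 * PI * IZR z) = f (x, y, t).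
Proof.
  intros Hp x y t z. destruct (Z.le_gt_cases 0 z) as [Hz|Hz].
  - rewrite <- (Z2Nat.id z Hz). rewrite <- INR_IZR_INZ. apply per_nat; auto.
  - rewrite <- (per_nat f Hp x y (t + 2 * PI * IZR z) (Z.to_nat (- z))).
    f_equal. f_equal. rewrite INR_IZR_INZ, Z2Nat.id by lia. rewrite opp_IZR. ring.
Qed.

Lemma reduce_t (t : R) : exists (z : Z) t0, 0 <= t0 <= 2 * PI /\ t = t0 + 2 * PI * IZR z.
Proof.
  pose proof PI_RGT_0 as HP.
  destruct (archimed (t / (2 * PI))) as [H1 H2].
  exists (up (t / (2 * PI)) - 1)%Z. exists (t - 2 * PI * IZR (up (t / (2 * PI)) - 1)).
  rewrite minus_IZR. split; [|ring].
  set (u := IZR (up (t / (2 * PI)))) in *.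
  assert (E : t = 2 * PI * (t / (2 * PI))) by (field; lra).
  set (r := t / (2 * PI)) in *.
  split; nra.
Qed.

Definition clamp (x : R) : R := Rmax (- / 2) (Rmin (/ 2) x).

Lemma clamp_lip x x' : Rabs (clamp x' - clamp x) <= Rabs (x' - x).
Proof.
  unfold clamp, Rmax, Rmin. repeat destruct Rle_dec; unfold Rabs; repeat destruct Rcase_abs; lra.
Qed.

Lemma clamp_range x : - / 2 <= clamp x <= / 2.
Proof. unfold clamp, Rmax, Rmin. repeat destruct Rle_dec; lra. Qed.

Lemma clamp_eq (f : SE2 -> C) : vanish f ->
  forall x y t, f (x, y, t) = f (clamp x, y, t).
Proof.
  intros Hv x y t. unfold clamp, Rmax, Rmin.
  repeat destruct Rle_dec; try (f_equal; f_equal; lra);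
  rewrite !Hv; auto; left; unfold Rabs; repeat destruct Rcase_abs; lra.
Qed.

Lemma clamp_eq_y (f : SE2 -> C) : vanish f ->
  forall x y t, f (x, y, t) = f (x, clamp y, t).
Proof.
  intros Hv x y t. unfold clamp, Rmax, Rmin.
  repeat destruct Rle_dec; try (f_equal; f_equal; lra);
  rewrite !Hv; auto; right; unfold Rabs; repeat destruct Rcase_abs; lra.
Qed.

Definition LipB (f : SE2 -> C) (M : R) : Prop :=
  0 <= M /\
  (forall x x' y t, Cmod (Cminus (f (x', y, t)) (f (x, y, t))) <= M * Rabs (x' - x)) /\
  (forall x y y' t, Cmod (Cminus (f (x, y', t)) (f (x, y, t))) <= M * Rabs (y' - y)) /\
  (forall x y t t', Cmod (Cminus (f (x, y, t')) (f (x, y, t))) <= M * Rabs (t' - t)) /\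
  (forall x y t, Cmod (f (x, y, t)) <= M).

Lemma LipB_mono f M M' : LipB f M -> M <= M' -> LipB f M'.
Proof.
  intros [H0 [H1 [H2 [H3 H4]]]] HM. repeat split.
  - lra.
  - intros. eapply Rle_trans. apply H1. apply Rmult_le_compat_r; auto using Rabs_pos.
  - intros. eapply Rle_trans. apply H2. apply Rmult_le_compat_r; auto using Rabs_pos.
  - intros. eapply Rle_trans. apply H3. apply Rmult_le_compat_r; auto using Rabs_pos.
  - intros. eapply Rle_trans. apply H4. lra.
Qed.

Lemma Cmod_sub_zero (a : C) : Cmod (Cminus a (RtoC 0)) = Cmod a.
Proof. f_equal. ring. Qed.

Lemma c1_lip (f : SE2 -> C) : C1_SE2 f -> vanish f -> exists M, LipB f M.
Proof.
  intros [Hp [fx [fy [ft [Hdx [Hdy [Hdt [Hcx [Hcy Hct]]]]]]]]] Hv.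
  destruct (box_bound fx (-/2) (/2) (-/2) (/2) 0 (2*PI) Hcx) as [Mx [Mx0 HMx]].
  destruct (box_bound fy (-/2) (/2) (-/2) (/2) 0 (2*PI) Hcy) as [My [My0 HMy]].
  destruct (box_bound ft (-/2) (/2) (-/2) (/2) (-(2*PI)) (4*PI) Hct) as [Mt [Mt0 HMt]].
  pose proof PI_RGT_0 as HPI.
  assert (Lx : forall x x' y t, Cmod (Cminus (f (x', y, t)) (f (x, y, t))) <= Mx * Rabs (x' - x)).
  { intros x x' y t. destruct (reduce_t t) as [z [t0 [Ht0 ->]]].
    rewrite !(per_int f Hp).
    destruct (Rle_dec (Rabs y) (/4)) as [Hy|Hy].
    2:{ rewrite !Hv by (right; lra). rewrite Cmod_sub_zero, Cmod_0.
        apply Rmult_le_pos; auto using Rabs_pos. }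
    rewrite (clamp_eq f Hv x'), (clamp_eq f Hv x).
    eapply Rle_trans.
    apply (ftc_lip (fun s => f (s, y, t0)) (fun s => fx (s, y, t0)) (clamp x) (clamp x') Mx).
    - intros; apply Hdx.
    - intros; apply cont_slice_x; apply Hcx.
    - intros s Hs. apply HMx; try lra.
      + pose proof (clamp_range x); pose proof (clamp_range x').
        unfold Rmin, Rmax in Hs; repeat destruct Rle_dec in Hs; lra.
      + unfold Rabs in Hy; destruct Rcase_abs in Hy; lra.
    - apply Rmult_le_compat_l; auto. apply clamp_lip. }
  assert (Ly : forall x y y' t, Cmod (Cminus (f (x, y', t)) (f (x, y, t))) <= My * Rabs (y' - y)).
  { intros x y y' t. destruct (reduce_t t) as [z [t0 [Ht0 ->]]].
    rewrite !(per_int f Hp).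
    destruct (Rle_dec (Rabs x) (/4)) as [Hx|Hx].
    2:{ rewrite !Hv by (left; lra). rewrite Cmod_sub_zero, Cmod_0.
        apply Rmult_le_pos; auto using Rabs_pos. }
    rewrite (clamp_eq_y f Hv x y'), (clamp_eq_y f Hv x y).
    eapply Rle_trans.
    apply (ftc_lip (fun s => f (x, s, t0)) (fun s => fy (x, s, t0)) (clamp y) (clamp y') My).
    - intros; apply Hdy.
    - intros; apply cont_slice_y; apply Hcy.
    - intros s Hs. apply HMy; try lra.
      + unfold Rabs in Hx; destruct Rcase_abs in Hx; lra.
      + pose proof (clamp_range y); pose proof (clamp_range y').
        unfold Rmin, Rmax in Hs; repeat destruct Rle_dec in Hs; lra.
    - apply Rmult_le_compat_l; auto. apply clamp_lip. }
  assert (B : forall x y t, Cmod (f (x, y, t)) <= 2 * Mx).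
  { intros x y t. destruct (Rle_dec (Rabs x) (/4)) as [Hx|Hx].
    - rewrite <- (Cmod_sub_zero (f (x, y, t))).
      rewrite <- (Hv (-1) y t) by (left; rewrite Rabs_left; lra).
      eapply Rle_trans. apply Lx. apply Rle_trans with (Mx * 2); [|lra]. apply Rmult_le_compat_l; auto.
      unfold Rabs in *; repeat destruct Rcase_abs; lra.
    - rewrite Hv by (left; lra). rewrite Cmod_0. lra. }
  assert (Lt : forall x y t t', Cmod (Cminus (f (x, y, t')) (f (x, y, t))) <= (Mt + 4 * Mx / PI) * Rabs (t' - t)).
  { intros x y t t'.
    destruct (Rle_dec (2 * PI) (Rabs (t' - t))) as [Hb|Hb].
    - eapply Rle_trans. apply Cmod_triangle. rewrite Cmod_opp.
      pose proof (B x y t); pose proof (B x y t').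
      assert (4 * Mx <= 4 * Mx / PI * Rabs (t' - t)).
      { replace (4 * Mx / PI * Rabs (t' - t)) with (4 * Mx * (Rabs (t' - t) / PI)) by (field; lra).
        rewrite <- (Rmult_1_r (4 * Mx)) at 1. apply Rmult_le_compat_l. lra.
        apply (Rmult_le_reg_r PI); auto. unfold Rdiv. rewrite Rmult_assoc, Rinv_l by lra. lra. }
      pose proof (Rabs_pos (t' - t)). nra.
    - destruct (reduce_t t) as [z [t0 [Ht0 Htt]]].
      assert (Ht' : f (x, y, t') = f (x, y, t0 + (t' - t))).
      { rewrite <- (per_int f Hp x y (t0 + (t' - t)) z). f_equal; f_equal; lra. }
      assert (Ht : f (x, y, t) = f (x, y, t0)).
      { rewrite <- (per_int f Hp x y t0 z). f_equal; f_equal; lra. }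
      rewrite Ht', Ht.
      replace (Rabs (t' - t)) with (Rabs ((t0 + (t' - t)) - t0)) by (f_equal; ring).
      rewrite (clamp_eq f Hv x y t0), (clamp_eq f Hv x y (t0 + (t' - t))).
      rewrite (clamp_eq_y f Hv (clamp x) y t0), (clamp_eq_y f Hv (clamp x) y (t0 + (t' - t))).
      eapply Rle_trans.
      apply (ftc_lip (fun s => f (clamp x, clamp y, s)) (fun s => ft (clamp x, clamp y, s)) t0 (t0 + (t' - t)) Mt).
      + intros; apply Hdt.
      + intros; apply cont_slice_t; apply Hct.
      + intros s Hs. pose proof (clamp_range x); pose proof (clamp_range y).
        apply HMt; try lra.
        unfold Rabs in Hb; destruct Rcase_abs in Hb;
        unfold Rmin, Rmax in Hs; repeat destruct Rle_dec in Hs; lra.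
      + apply Rmult_le_compat_r. apply Rabs_pos.
        assert (0 <= 4 * Mx / PI) by (apply Rdiv_le_0_compat; lra). lra. }
  exists (Mx + My + (Mt + 4 * Mx / PI) + 2 * Mx).
  assert (0 <= 4 * Mx / PI) by (apply Rdiv_le_0_compat; lra).
  repeat split.
  - lra.
  - intros. eapply Rle_trans. apply Lx. apply Rmult_le_compat_r; auto using Rabs_pos; lra.
  - intros. eapply Rle_trans. apply Ly. apply Rmult_le_compat_r; auto using Rabs_pos; lra.
  - intros. eapply Rle_trans. apply Lt. apply Rmult_le_compat_r; auto using Rabs_pos; lra.
  - intros. eapply Rle_trans. apply B. lra.
Qed.

Lemma abs_le_sqrt x y : Rabs x <= sqrt (x ^ 2 + y ^ 2).
Proof.
  rewrite <- sqrt_Rsqr_abs. apply sqrt_le_1_alt. unfold Rsqr. nra.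
Qed.
Lemma abs_le_sqrt' x y : Rabs y <= sqrt (x ^ 2 + y ^ 2).
Proof.
  rewrite <- sqrt_Rsqr_abs. apply sqrt_le_1_alt. unfold Rsqr. nra.
Qed.

Lemma vanish_Dcl (rho : SE2 -> C) : supported_in rho (Dcl (/4)) -> vanish rho.
Proof.
  intros Hs x y t Hxy. refine (locally_singleton _ _ (Hs (x, y, t) _)).
  unfold Dcl, px, py; cbn [fst snd]. pose proof (abs_le_sqrt x y); pose proof (abs_le_sqrt' x y). lra.
Qed.

Lemma vanish_Dop (f : SE2 -> C) : supported_in f (Dop (/4)) -> vanish f.
Proof.
  intros Hs x y t Hxy. refine (locally_singleton _ _ (Hs (x, y, t) _)).
  unfold Dop, px, py; cbn [fst snd]. pose proof (abs_le_sqrt x y); pose proof (abs_le_sqrt' x y). lra.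
Qed.

Lemma red (x : R) : exists m : Z, - / 2 <= x - IZR m < / 2.
Proof.
  destruct (archimed (x + / 2)) as [H1 H2].
  exists (up (x + / 2) - 1)%Z. rewrite minus_IZR. simpl. lra.
Qed.

Lemma per_lip1 (g p : R -> C) M B :
  (forall x (m : Z), Rabs (x - IZR m) <= / 2 -> g x = p (x - IZR m)) ->
  (forall u v, Cmod (Cminus (p v) (p u)) <= M * Rabs (v - u)) ->
  (forall u, / 4 < Rabs u -> p u = RtoC 0) ->
  (forall u, Cmod (p u) <= B) ->
  forall x x', Cmod (Cminus (g x') (g x)) <= (M + 8 * B) * Rabs (x' - x).
Proof.
  intros Hg Hl Hz HB x x'.
  assert (B0 : 0 <= B) by (eapply Rle_trans; [apply Cmod_ge_0|apply (HB 0)]).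
  assert (M0 : 0 <= M).
  { pose proof (Hl 0 1). pose proof (Cmod_ge_0 (Cminus (p 1) (p 0))).
    rewrite Rabs_right in H by lra. lra. }
  destruct (Rle_dec (/ 4) (Rabs (x' - x))) as [Hb|Hb].
  - eapply Rle_trans. apply Cmod_triangle. rewrite Cmod_opp.
    destruct (red x) as [m Hm]. destruct (red x') as [m' Hm'].
    rewrite (Hg x m), (Hg x' m') by (unfold Rabs; destruct Rcase_abs; lra).
    pose proof (HB (x' - IZR m')). pose proof (HB (x - IZR m)).
    pose proof (Rabs_pos (x' - x)). nra.
  - destruct (red x) as [m Hm].
    assert (HM : M * Rabs (x' - x) <= (M + 8 * B) * Rabs (x' - x)).
    { apply Rmult_le_compat_r. apply Rabs_pos. lra. }
    destruct (Rle_dec (Rabs (x' - IZR m)) (/ 2)) as [H1|H1].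
    + rewrite (Hg x m), (Hg x' m) by (auto; unfold Rabs; destruct Rcase_abs; lra).
      eapply Rle_trans; [apply Hl|]. replace (x' - IZR m - (x - IZR m)) with (x' - x) by ring. auto.
    + assert (Hc : x' - IZR m > / 2 \/ x' - IZR m < - / 2) by (unfold Rabs in H1; destruct Rcase_abs in H1; lra).
      destruct Hc as [Hc|Hc].
      * rewrite (Hg x m) by (unfold Rabs; destruct Rcase_abs; lra).
        rewrite (Hg x' (m + 1)%Z) by (rewrite plus_IZR; simpl; unfold Rabs in *; repeat destruct Rcase_abs; lra).
        rewrite Hz by (rewrite ?plus_IZR; simpl; unfold Rabs in *; repeat destruct Rcase_abs; lra).
        rewrite Hz by (rewrite ?plus_IZR; simpl; unfold Rabs in *; repeat destruct Rcase_abs; lra).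
        rewrite Cmod_sub_zero, Cmod_0. apply Rmult_le_pos; [lra|apply Rabs_pos].
      * rewrite (Hg x m) by (unfold Rabs; destruct Rcase_abs; lra).
        rewrite (Hg x' (m - 1)%Z) by (rewrite minus_IZR; simpl; unfold Rabs in *; repeat destruct Rcase_abs; lra).
        rewrite Hz by (rewrite ?minus_IZR; simpl; unfold Rabs in *; repeat destruct Rcase_abs; lra).
        rewrite Hz by (rewrite ?minus_IZR; simpl; unfold Rabs in *; repeat destruct Rcase_abs; lra).
        rewrite Cmod_sub_zero, Cmod_0. apply Rmult_le_pos; [lra|apply Rabs_pos].
Qed.

Lemma psiOmega_in psi x y t : - / 2 <= x < / 2 -> - / 2 <= y < / 2 ->
  psiOmega psi (x, y, t) = psi (x, y, t).
Proof.
  intros Hx Hy. unfold psiOmega, px, py; simpl.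
  repeat destruct Rle_dec; repeat destruct Rlt_dec; try lra; reflexivity.
Qed.

Lemma psi_at_x psi : on_X psi -> vanish (psiOmega psi) ->
  forall x y t (m : Z), - / 2 <= y < / 2 -> Rabs (x - IZR m) <= / 2 ->
  psi (x, y, t) = psiOmega psi (x - IZR m, y, t).
Proof.
  intros [Hp _] Hv x y t m Hy Hm.
  destruct (Rlt_dec (x - IZR m) (/ 2)) as [H|H].
  - rewrite psiOmega_in by (unfold Rabs in Hm; destruct Rcase_abs in Hm; lra).
    rewrite <- (Hp m 0%Z (x - IZR m) y t). f_equal. f_equal. f_equal; simpl; ring.
  - assert (E : x - IZR m = / 2) by (unfold Rabs in Hm; destruct Rcase_abs in Hm; lra).
    rewrite E. replace (psiOmega psi (/ 2, y, t)) with (RtoC 0)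
      by (unfold psiOmega, px, py; simpl; repeat destruct Rle_dec; repeat destruct Rlt_dec; try lra; reflexivity).
    transitivity (psi (- / 2 + IZR (m + 1), y + IZR 0, t)).
    { f_equal. f_equal. f_equal. rewrite plus_IZR; simpl; lra. simpl; ring. }
    rewrite Hp. rewrite <- psiOmega_in by lra. apply Hv; left; rewrite Rabs_left; lra.
Qed.

Lemma psi_at_y psi : on_X psi -> vanish (psiOmega psi) ->
  forall x y t (m : Z), - / 2 <= x < / 2 -> Rabs (y - IZR m) <= / 2 ->
  psi (x, y, t) = psiOmega psi (x, y - IZR m, t).
Proof.
  intros [Hp _] Hv x y t m Hx Hm.
  destruct (Rlt_dec (y - IZR m) (/ 2)) as [H|H].
  - rewrite psiOmega_in by (unfold Rabs in Hm; destruct Rcase_abs in Hm; lra).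
    rewrite <- (Hp 0%Z m x (y - IZR m) t). f_equal. f_equal. f_equal; simpl; ring.
  - assert (E : y - IZR m = / 2) by (unfold Rabs in Hm; destruct Rcase_abs in Hm; lra).
    rewrite E. replace (psiOmega psi (x, / 2, t)) with (RtoC 0)
      by (unfold psiOmega, px, py; simpl; repeat destruct Rle_dec; repeat destruct Rlt_dec; try lra; reflexivity).
    transitivity (psi (x + IZR 0, - / 2 + IZR (m + 1), t)).
    { f_equal. f_equal. f_equal. simpl; ring. rewrite plus_IZR; simpl; lra. }
    rewrite Hp. rewrite <- psiOmega_in by lra. apply Hv; right; rewrite Rabs_left; lra.
Qed.

Lemma psi_lip psi : on_X psi -> C1_SE2 (psiOmega psi) -> supported_in (psiOmega psi) (Dop (/4)) ->
  exists M, LipB psi M.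
Proof.
  intros HX HC HS. pose proof (vanish_Dop _ HS) as Hv.
  destruct (c1_lip _ HC Hv) as [M [M0 [Lx [Ly [Lt B]]]]].
  destruct HX as [Hp1 Hp2] eqn:HXe.
  assert (Hxy : forall x y : R, exists x0 y0, - / 2 <= x0 < / 2 /\ - / 2 <= y0 < / 2 /\
     forall t', psi (x, y, t') = psiOmega psi (x0, y0, t')).
  { intros x y. destruct (red x) as [m Hm]. destruct (red y) as [n Hn].
    exists (x - IZR m), (y - IZR n). split; auto. split; auto. intros t'.
    rewrite psiOmega_in by auto. rewrite <- (Hp1 m n (x - IZR m) (y - IZR n) t').
    f_equal. f_equal. f_equal; ring. }
  exists (M + 8 * M). repeat split.
  - lra.
  - intros x x' y t. destruct (red y) as [n Hn].
    assert (E : forall s, psi (s, y, t) = psi (s, y - IZR n, t)).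
    { intros s. rewrite <- (Hp1 0%Z n s (y - IZR n) t). f_equal. f_equal. f_equal; simpl; ring. }
    rewrite !E.
    apply (per_lip1 (fun s => psi (s, y - IZR n, t)) (fun s => psiOmega psi (s, y - IZR n, t)) M M).
    + intros s m Hm. apply psi_at_x; auto.
    + intros; apply Lx.
    + intros; apply Hv; auto.
    + intros; apply B.
  - intros x y y' t. destruct (red x) as [n Hn].
    assert (E : forall s, psi (x, s, t) = psi (x - IZR n, s, t)).
    { intros s. rewrite <- (Hp1 n 0%Z (x - IZR n) s t). f_equal. f_equal. f_equal; simpl; ring. }
    rewrite !E.
    apply (per_lip1 (fun s => psi (x - IZR n, s, t)) (fun s => psiOmega psi (x - IZR n, s, t)) M M).
    + intros s m Hm. apply psi_at_y; auto.
    + intros; apply Ly.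
    + intros; apply Hv; auto.
    + intros; apply B.
  - intros x y t t'. destruct (Hxy x y) as [x0 [y0 [_ [_ E]]]]. rewrite !E.
    eapply Rle_trans. apply Lt. apply Rmult_le_compat_r. apply Rabs_pos. lra.
  - intros x y t. destruct (Hxy x y) as [x0 [y0 [_ [_ E]]]]. rewrite !E.
    eapply Rle_trans. apply B. lra.
Qed.

Notation RIC := (@RInt C_R_CompleteNormedModule).
Notation exC := (@ex_RInt C_R_NormedModule).

Definition Lip1 (g : R -> C) (M : R) : Prop :=
  forall x y, Cmod (Cminus (g y) (g x)) <= M * Rabs (y - x).

Lemma Lip1_ex g M a b : Lip1 g M -> @ex_RInt C_R_CompleteNormedModule g a b.
Proof. intros H. apply ex_RInt_continuous. intros. apply (lip_cont g M H). Qed.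

Lemma RG (f : R -> C) a b : a <= b -> (forall x, x < a \/ b < x -> f x = RtoC 0) ->
  @ex_RInt C_R_CompleteNormedModule f a b ->
  @RInt_gen C_R_CompleteNormedModule f (Rbar_locally m_infty) (Rbar_locally p_infty) = RIC f a b.
Proof.
  intros Hab Hz Hex. apply is_RInt_gen_unique.
  unfold is_RInt_gen, filterlimi, filter_le, filtermapi. intros P HP.
  apply Filter_prod with (fun x => x < a) (fun x => b < x).
  - exists a. auto.
  - exists b. auto.
  - intros u v Hu Hv. exists (RIC f a b). split; [|apply locally_singleton; auto].
    simpl.
    assert (H0 : forall c d, c <= d -> (forall x, c < x < d -> f x = RtoC 0) ->
              @is_RInt C_R_NormedModule f c d zero).
    { intros c d Hcd Hf.
      pose proof (@is_RInt_const C_R_NormedModule c d (RtoC 0)) as H.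
      match type of H with is_RInt _ _ _ ?l => replace l with (@zero C_R_NormedModule) in H end.
      2:{ apply injective_projections; simpl; unfold zero, scal; simpl; unfold mult, zero; simpl; ring. }
      apply (is_RInt_ext (fun _ => RtoC 0)). 2: exact H.
      intros x Hx. rewrite Rmin_left, Rmax_right in Hx by lra. rewrite Hf by lra. reflexivity. }
    change (@is_RInt C_R_NormedModule f u v (RIC f a b)).
    replace (RIC f a b) with (@plus C_R_NormedModule (@plus C_R_NormedModule zero (RIC f a b)) zero)
      by (rewrite plus_zero_r, plus_zero_l; reflexivity).
    eapply is_RInt_Chasles. eapply is_RInt_Chasles.
    + apply (H0 u a). lra. intros; apply Hz; lra.
    + exact (@RInt_correct C_R_CompleteNormedModule f a b Hex).
    + apply (H0 b v). lra. intros; apply Hz; lra.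
Qed.

Lemma RInt_diff_bound (g1 g2 : R -> C) a b M : a <= b ->
  @ex_RInt C_R_CompleteNormedModule g1 a b -> @ex_RInt C_R_CompleteNormedModule g2 a b ->
  (forall x, a <= x <= b -> Cmod (Cminus (g1 x) (g2 x)) <= M) ->
  Cmod (Cminus (RIC g1 a b) (RIC g2 a b)) <= (b - a) * M.
Proof.
  intros Hab H1 H2 HM.
  assert (E : Cminus (RIC g1 a b) (RIC g2 a b) = @minus C_R_CompleteNormedModule (RIC g1 a b) (RIC g2 a b)) by reflexivity.
  rewrite E. rewrite <- (@RInt_minus C_R_CompleteNormedModule g1 g2 a b H1 H2).
  rewrite Cmod_norm. apply (norm_RInt_le_const (fun x => minus (g1 x) (g2 x)) a b _ M Hab).
  - intros. rewrite <- Cmod_norm. apply HM; auto.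
  - apply (@RInt_correct C_R_CompleteNormedModule). apply (@ex_RInt_minus C_R_CompleteNormedModule); auto.
Qed.

Lemma Cmod_scal (h : R) (z : C) : Cmod (scal h z) = Rabs h * Cmod z.
Proof. rewrite scal_C, Cmod_mult, Cmod_R. reflexivity. Qed.

Lemma cell_right g M x h : 0 <= h -> Lip1 g M ->
  Cmod (Cminus (RIC g (x - h) x) (scal h (g x))) <= h * (M * h).
Proof.
  intros Hh Hg.
  replace (scal h (g x)) with (RIC (fun _ => g x) (x - h) x)
    by (rewrite RInt_const; f_equal; ring).
  replace (h * (M * h)) with ((x - (x - h)) * (M * h)) by ring.
  apply RInt_diff_bound; try lra.
  - eapply Lip1_ex; eauto.
  - apply ex_RInt_const.
  - intros s Hs. eapply Rle_trans. apply Hg. apply Rmult_le_compat_l.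
    + pose proof (Hg 0 1). pose proof (Cmod_ge_0 (Cminus (g 1) (g 0))). rewrite Rabs_right in H by lra. lra.
    + unfold Rabs; destruct Rcase_abs; lra.
Qed.

Lemma cell_left g M x h : 0 <= h -> Lip1 g M ->
  Cmod (Cminus (RIC g x (x + h)) (scal h (g x))) <= h * (M * h).
Proof.
  intros Hh Hg.
  replace (scal h (g x)) with (RIC (fun _ => g x) x (x + h))
    by (rewrite RInt_const; f_equal; ring).
  replace (h * (M * h)) with ((x + h - x) * (M * h)) by ring.
  apply RInt_diff_bound; try lra.
  - eapply Lip1_ex; eauto.
  - apply ex_RInt_const.
  - intros s Hs. eapply Rle_trans. apply Hg. apply Rmult_le_compat_l.
    + pose proof (Hg 0 1). pose proof (Cmod_ge_0 (Cminus (g 1) (g 0))). rewrite Rabs_right in H by lra. lra.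
    + unfold Rabs; destruct Rcase_abs; lra.
Qed.

Lemma RIC_Chasles g a b c : @ex_RInt C_R_CompleteNormedModule g a b -> @ex_RInt C_R_CompleteNormedModule g b c ->
  Cplus (RIC g a b) (RIC g b c) = RIC g a c.
Proof. intros H1 H2. exact (@RInt_Chasles C_R_CompleteNormedModule g a b c H1 H2). Qed.

Lemma scal_plus_C (h : R) (a b : C) : scal h (Cplus a b) = Cplus (scal h a) (scal h b).
Proof. rewrite !scal_C. change (Cmult (RtoC h) (Cplus a b) = Cplus (Cmult (RtoC h) a) (Cmult (RtoC h) b)). ring. Qed.

Lemma riem_desc g M b h n : 0 <= h -> Lip1 g M ->
  Cmod (Cminus (RIC g (b - INR n * h) b) (scal h (sC n (fun j => g (b - INR j * h)))))
  <= INR n * h * (M * h).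
Proof.
  intros Hh Hg. induction n.
  - simpl. replace (b - 0 * h) with b by ring. rewrite RInt_point.
    rewrite scal_C. match goal with |- Cmod ?z <= _ => replace z with (RtoC 0) end.
    rewrite Cmod_0. lra.
    apply injective_projections; simpl; unfold zero; simpl; ring.
  - rewrite <- (RIC_Chasles g (b - INR (S n) * h) (b - INR n * h) b) by (eapply Lip1_ex; eauto).
    cbn [sC]. rewrite scal_plus_C.
    replace (Cminus (Cplus (RIC g (b - INR (S n) * h) (b - INR n * h)) (RIC g (b - INR n * h) b))
                    (Cplus (scal h (sC n (fun j => g (b - INR j * h)))) (scal h (g (b - INR n * h)))))
      with (Cplus (Cminus (RIC g (b - INR n * h) b) (scal h (sC n (fun j => g (b - INR j * h)))))
                  (Cminus (RIC g (b - INR (S n) * h) (b - INR n * h)) (scal h (g (b - INR n * h))))) by ring.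
    eapply Rle_trans. apply Cmod_triangle.
    pose proof (cell_right g M (b - INR n * h) h Hh Hg) as Hc.
    replace (b - INR n * h - h) with (b - INR (S n) * h) in Hc by (rewrite S_INR; ring).
    rewrite S_INR in *. lra.
Qed.

Lemma riem_asc g M a h n : 0 <= h -> Lip1 g M ->
  Cmod (Cminus (RIC g a (a + INR n * h)) (scal h (sC n (fun j => g (a + INR j * h)))))
  <= INR n * h * (M * h).
Proof.
  intros Hh Hg. induction n.
  - simpl. replace (a + 0 * h) with a by ring. rewrite RInt_point.
    rewrite scal_C. match goal with |- Cmod ?z <= _ => replace z with (RtoC 0) end.
    rewrite Cmod_0. lra.
    apply injective_projections; simpl; unfold zero; simpl; ring.
  - rewrite <- (RIC_Chasles g a (a + INR n * h) (a + INR (S n) * h)) by (eapply Lip1_ex; eauto).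
    cbn [sC]. rewrite scal_plus_C.
    replace (Cminus (Cplus (RIC g a (a + INR n * h)) (RIC g (a + INR n * h) (a + INR (S n) * h)))
                    (Cplus (scal h (sC n (fun j => g (a + INR j * h)))) (scal h (g (a + INR n * h)))))
      with (Cplus (Cminus (RIC g a (a + INR n * h)) (scal h (sC n (fun j => g (a + INR j * h)))))
                  (Cminus (RIC g (a + INR n * h) (a + INR (S n) * h)) (scal h (g (a + INR n * h))))) by ring.
    eapply Rle_trans. apply Cmod_triangle.
    pose proof (cell_left g M (a + INR n * h) h Hh Hg) as Hc.
    replace (a + INR n * h + h) with (a + INR (S n) * h) in Hc by (rewrite S_INR; ring).
    rewrite S_INR in *. lra.
Qed.

Lemma Cmod_scal_le (h : R) (z : C) e : 0 <= h -> Cmod z <= e -> Cmod (scal h z) <= h * e.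
Proof.
  intros Hh Hz. rewrite Cmod_scal, Rabs_right by lra. apply Rmult_le_compat_l; auto.
Qed.

Lemma sum_approx (n : nat) (A B : nat -> C) e :
  (forall i, (i < n)%nat -> Cmod (Cminus (A i) (B i)) <= e) ->
  Cmod (Cminus (sC n A) (sC n B)) <= INR n * e.
Proof.
  intros H. rewrite <- sC_minus. apply sC_norm. auto.
Qed.

Lemma scal_minus_C (h : R) (a b : C) : scal h (Cminus a b) = Cminus (scal h a) (scal h b).
Proof. rewrite !scal_C. change (Cmult (RtoC h) (Cminus a b) = Cminus (Cmult (RtoC h) a) (Cmult (RtoC h) b)). ring. Qed.

Lemma scal_sC (h : R) n F : scal h (sC n F) = sC n (fun i => scal h (F i)).
Proof.
  rewrite scal_C. rewrite <- sC_mul_l. apply sC_ext. intros. rewrite scal_C. reflexivity.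
Qed.

Lemma scal_scal_C (a b : R) (z : C) : scal (a * b) z = scal a (scal b z).
Proof. rewrite !scal_C. change (Cmult (RtoC (a * b)) z = Cmult (RtoC a) (Cmult (RtoC b) z)).
  rewrite RtoC_mult. ring. Qed.

Lemma riemann3 (F : R -> R -> R -> C) Mu Mv Ms c1 c2 L1 L2 L3 :
  (1 <= L1)%nat -> (1 <= L2)%nat -> (1 <= L3)%nat ->
  0 <= Mu -> 0 <= Mv -> 0 <= Ms ->
  (forall u u' v s, Cmod (Cminus (F u' v s) (F u v s)) <= Mu * Rabs (u' - u)) ->
  (forall u v v' s, Cmod (Cminus (F u v' s) (F u v s)) <= Mv * Rabs (v' - v)) ->
  (forall u v s s', Cmod (Cminus (F u v s') (F u v s)) <= Ms * Rabs (s' - s)) ->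
  Cmod (Cminus
    (RIC (fun u => RIC (fun v => RIC (fun s => F u v s) 0 (2 * PI)) (c2 - / 2) (c2 + / 2)) (c1 - / 2) (c1 + / 2))
    (scal (/ INR L1 * / INR L2 * (2 * PI / INR L3))
      (sC L1 (fun i => sC L2 (fun j => sC L3 (fun l =>
         F (c1 + / 2 - INR i * / INR L1) (c2 + / 2 - INR j * / INR L2) (0 + INR l * (2 * PI / INR L3))))))))
  <= 2 * PI * (Mu * / INR L1 + Mv * / INR L2 + Ms * (2 * PI / INR L3)).
Proof.
  intros HL1 HL2 HL3 Mu0 Mv0 Ms0 Hu Hv Hs.
  pose proof PI_RGT_0 as HPI.
  assert (HI1 : 0 < INR L1) by (apply lt_0_INR; lia).
  assert (HI2 : 0 < INR L2) by (apply lt_0_INR; lia).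
  assert (HI3 : 0 < INR L3) by (apply lt_0_INR; lia).
  set (h1 := / INR L1). set (h2 := / INR L2). set (h3 := 2 * PI / INR L3).
  assert (Hh1 : 0 <= h1) by (unfold h1; apply Rlt_le, Rinv_0_lt_compat; lra).
  assert (Hh2 : 0 <= h2) by (unfold h2; apply Rlt_le, Rinv_0_lt_compat; lra).
  assert (Hh3 : 0 <= h3) by (unfold h3; apply Rdiv_le_0_compat; lra).
  assert (E1 : INR L1 * h1 = 1) by (unfold h1; field; lra).
  assert (E2 : INR L2 * h2 = 1) by (unfold h2; field; lra).
  assert (E3 : INR L3 * h3 = 2 * PI) by (unfold h3; field; lra).
  set (J := fun u v => RIC (fun s => F u v s) 0 (2 * PI)).
  set (I := fun u => RIC (fun v => J u v) (c2 - / 2) (c2 + / 2)).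
  assert (LS : forall u v, Lip1 (fun s => F u v s) Ms) by (intros u v x y; apply Hs).
  assert (LJu : forall u u' v, Cmod (Cminus (J u' v) (J u v)) <= 2 * PI * Mu * Rabs (u' - u)).
  { intros. unfold J. replace (2 * PI * Mu * Rabs (u' - u)) with ((2 * PI - 0) * (Mu * Rabs (u' - u))) by ring.
    apply RInt_diff_bound; try lra; try (eapply Lip1_ex; apply LS).
    intros; apply Hu. }
  assert (LJv : forall u, Lip1 (fun v => J u v) (2 * PI * Mv)).
  { intros u v v'. unfold J. replace (2 * PI * Mv * Rabs (v' - v)) with ((2 * PI - 0) * (Mv * Rabs (v' - v))) by ring.
    apply RInt_diff_bound; try lra; try (eapply Lip1_ex; apply LS).
    intros; apply Hv. }
  assert (LI : Lip1 I (2 * PI * Mu)).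
  { intros u u'. unfold I.
    replace (2 * PI * Mu * Rabs (u' - u)) with ((c2 + / 2 - (c2 - / 2)) * (2 * PI * Mu * Rabs (u' - u))) by field.
    apply RInt_diff_bound; try lra; try (eapply Lip1_ex; apply LJv).
    intros; apply LJu. }
  pose proof (riem_desc I (2 * PI * Mu) (c1 + / 2) h1 L1 Hh1 LI) as EA.
  replace (c1 + / 2 - INR L1 * h1) with (c1 - / 2) in EA by lra.
  assert (EB : forall i, Cmod (Cminus (I (c1 + / 2 - INR i * h1))
                  (scal h2 (sC L2 (fun j => J (c1 + / 2 - INR i * h1) (c2 + / 2 - INR j * h2)))))
                <= 2 * PI * Mv * h2).
  { intros i. pose proof (riem_desc (fun v => J (c1 + / 2 - INR i * h1) v) (2 * PI * Mv) (c2 + / 2) h2 L2 Hh2 (LJv _)) as H.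
    replace (c2 + / 2 - INR L2 * h2) with (c2 - / 2) in H by lra.
    unfold I. eapply Rle_trans. apply H. right. replace (INR L2 * h2 * (2 * PI * Mv * h2)) with ((INR L2 * h2) * (2 * PI * Mv * h2)) by ring.
    rewrite E2. ring. }
  assert (EC : forall u v, Cmod (Cminus (J u v) (scal h3 (sC L3 (fun l => F u v (0 + INR l * h3)))))
                <= 2 * PI * Ms * h3).
  { intros u v. pose proof (riem_asc (fun s => F u v s) Ms 0 h3 L3 Hh3 (LS u v)) as H.
    rewrite E3 in H. rewrite Rplus_0_l in H at 1.
    unfold J. eapply Rle_trans. apply H. right. ring. }
  set (X := fun i => I (c1 + / 2 - INR i * h1)).
  set (Y := fun i => scal h2 (sC L2 (fun j => J (c1 + / 2 - INR i * h1) (c2 + / 2 - INR j * h2)))).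
  set (Z := fun i => scal h2 (sC L2 (fun j => scal h3 (sC L3 (fun l =>
              F (c1 + / 2 - INR i * h1) (c2 + / 2 - INR j * h2) (0 + INR l * h3)))))).
  assert (ES : scal (h1 * h2 * h3) (sC L1 (fun i => sC L2 (fun j => sC L3 (fun l =>
         F (c1 + / 2 - INR i * h1) (c2 + / 2 - INR j * h2) (0 + INR l * h3))))) = scal h1 (sC L1 Z)).
  { unfold Z. rewrite Rmult_assoc, scal_scal_C. f_equal. rewrite scal_sC. apply sC_ext. intros i _.
    rewrite scal_scal_C. f_equal. rewrite scal_sC. reflexivity. }
  rewrite ES.
  change (Cmod (Cminus (RIC I (c1 - / 2) (c1 + / 2)) (scal h1 (sC L1 Z))) <= 2 * PI * (Mu * h1 + Mv * h2 + Ms * h3)).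
  assert (EX : Cminus (RIC I (c1 - / 2) (c1 + / 2)) (scal h1 (sC L1 Z)) =
     Cplus (Cminus (RIC I (c1 - / 2) (c1 + / 2)) (scal h1 (sC L1 X)))
       (Cplus (scal h1 (Cminus (sC L1 X) (sC L1 Y))) (scal h1 (Cminus (sC L1 Y) (sC L1 Z))))).
  { rewrite !scal_minus_C. ring. }
  rewrite EX.
  eapply Rle_trans. apply Cmod_triangle.
  eapply Rle_trans. apply Rplus_le_compat_l. apply Cmod_triangle.
  assert (B2 : Cmod (scal h1 (Cminus (sC L1 X) (sC L1 Y))) <= h1 * (INR L1 * (2 * PI * Mv * h2))).
  { apply Cmod_scal_le; auto. apply sum_approx. intros; apply EB. }
  assert (B3 : Cmod (scal h1 (Cminus (sC L1 Y) (sC L1 Z))) <= h1 * (INR L1 * (h2 * (INR L2 * (2 * PI * Ms * h3))))).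
  { apply Cmod_scal_le; auto. apply sum_approx. intros i _. unfold Y, Z.
    rewrite <- scal_minus_C. apply Cmod_scal_le; auto. apply sum_approx. intros; apply EC. }
  replace (h1 * (INR L1 * (2 * PI * Mv * h2))) with ((INR L1 * h1) * (2 * PI * Mv * h2)) in B2 by ring.
  replace (h1 * (INR L1 * (h2 * (INR L2 * (2 * PI * Ms * h3))))) with ((INR L1 * h1) * (INR L2 * h2) * (2 * PI * Ms * h3)) in B3 by ring.
  replace (INR L1 * h1 * (2 * PI * Mu * h1)) with ((INR L1 * h1) * (2 * PI * Mu * h1)) in EA by ring.
  rewrite E1, E2 in *. fold X in EA. nra.
Qed.

Lemma int_SE2_ext G1 G2 : (forall u v s, G1 (u, v, s) = G2 (u, v, s)) -> int_SE2 G1 = int_SE2 G2.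
Proof.
  intros H. unfold int_SE2.
  replace (fun u => @RInt_gen C_R_CompleteNormedModule (fun v => RIC (fun s => G1 (u, v, s)) 0 (2 * PI))
        (Rbar_locally m_infty) (Rbar_locally p_infty))
    with (fun u => @RInt_gen C_R_CompleteNormedModule (fun v => RIC (fun s => G2 (u, v, s)) 0 (2 * PI))
        (Rbar_locally m_infty) (Rbar_locally p_infty)); [reflexivity|].
  apply functional_extensionality; intro u.
  replace (fun v => RIC (fun s => G1 (u, v, s)) 0 (2 * PI)) with (fun v => RIC (fun s => G2 (u, v, s)) 0 (2 * PI));
    [reflexivity|].
  apply functional_extensionality; intro v.
  replace (fun s => G1 (u, v, s)) with (fun s => G2 (u, v, s)); [reflexivity|].
  apply functional_extensionality; intro s. symmetry; apply H.
Qed.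

Lemma RIC_zero a b : RIC (fun _ => RtoC 0) a b = RtoC 0.
Proof. rewrite RInt_const, scal_C. change (Cmult (RtoC (b - a)) (RtoC 0) = RtoC 0). ring. Qed.

Lemma int_SE2_box (F : R -> R -> R -> C) Mu Mv Ms c1 c2 :
  0 <= Mu -> 0 <= Mv -> 0 <= Ms ->
  (forall u u' v s, Cmod (Cminus (F u' v s) (F u v s)) <= Mu * Rabs (u' - u)) ->
  (forall u v v' s, Cmod (Cminus (F u v' s) (F u v s)) <= Mv * Rabs (v' - v)) ->
  (forall u v s s', Cmod (Cminus (F u v s') (F u v s)) <= Ms * Rabs (s' - s)) ->
  (forall u v s, / 4 < Rabs (c1 - u) \/ / 4 < Rabs (c2 - v) -> F u v s = RtoC 0) ->
  int_SE2 (fun h => F (fst (fst h)) (snd (fst h)) (snd h)) =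
  scal (/ (2 * PI)) (RIC (fun u => RIC (fun v => RIC (fun s => F u v s) 0 (2 * PI)) (c2 - / 2) (c2 + / 2)) (c1 - / 2) (c1 + / 2)).
Proof.
  intros Mu0 Mv0 Ms0 Hu Hv Hs Hz. pose proof PI_RGT_0 as HPI.
  unfold int_SE2. cbn [fst snd]. f_equal.
  set (J := fun u v => RIC (fun s => F u v s) 0 (2 * PI)).
  set (I := fun u => RIC (fun v => J u v) (c2 - / 2) (c2 + / 2)).
  assert (LS : forall u v, Lip1 (fun s => F u v s) Ms) by (intros u v x y; apply Hs).
  assert (LJu : forall u u' v, Cmod (Cminus (J u' v) (J u v)) <= 2 * PI * Mu * Rabs (u' - u)).
  { intros. unfold J. replace (2 * PI * Mu * Rabs (u' - u)) with ((2 * PI - 0) * (Mu * Rabs (u' - u))) by ring.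
    apply RInt_diff_bound; try lra; try (eapply Lip1_ex; apply LS).
    intros; apply Hu. }
  assert (LJv : forall u, Lip1 (fun v => J u v) (2 * PI * Mv)).
  { intros u v v'. unfold J. replace (2 * PI * Mv * Rabs (v' - v)) with ((2 * PI - 0) * (Mv * Rabs (v' - v))) by ring.
    apply RInt_diff_bound; try lra; try (eapply Lip1_ex; apply LS).
    intros; apply Hv. }
  assert (LI : Lip1 I (2 * PI * Mu)).
  { intros u u'. unfold I.
    replace (2 * PI * Mu * Rabs (u' - u)) with ((c2 + / 2 - (c2 - / 2)) * (2 * PI * Mu * Rabs (u' - u))) by field.
    apply RInt_diff_bound; try lra; try (eapply Lip1_ex; apply LJv).
    intros; apply LJu. }
  assert (Jz : forall u v, / 4 < Rabs (c1 - u) \/ / 4 < Rabs (c2 - v) -> J u v = RtoC 0).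
  { intros u v H. unfold J. rewrite <- (RIC_zero 0 (2 * PI)). apply (@RInt_ext C_R_CompleteNormedModule). intros; apply Hz; auto. }
  assert (Inner : forall u, @RInt_gen C_R_CompleteNormedModule (fun v => RIC (fun s => F u v s) 0 (2 * PI))
        (Rbar_locally m_infty) (Rbar_locally p_infty) = I u).
  { intros u. apply RG. lra.
    - intros v Hv'. apply Jz. right. unfold Rabs; destruct Rcase_abs; lra.
    - eapply Lip1_ex. apply LJv. }
  replace (fun u => @RInt_gen C_R_CompleteNormedModule (fun v => RIC (fun s => F u v s) 0 (2 * PI))
        (Rbar_locally m_infty) (Rbar_locally p_infty)) with I
    by (apply functional_extensionality; intros; symmetry; apply Inner).
  apply RG. lra.
  - intros u Hu'. unfold I. rewrite <- (RIC_zero (c2 - / 2) (c2 + / 2)). apply (@RInt_ext C_R_CompleteNormedModule).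
    intros; apply Jz. left. unfold Rabs; destruct Rcase_abs; lra.
  - eapply Lip1_ex. apply LI.
Qed.

Lemma prod_lip (a a' b b' : C) Ma Mb Ba Bb e :
  Cmod (Cminus a' a) <= Ma * e -> Cmod (Cminus b' b) <= Mb * e ->
  Cmod a <= Ba -> Cmod b' <= Bb -> 0 <= e -> 0 <= Ma -> 0 <= Bb ->
  Cmod (Cminus (Cmult a' b') (Cmult a b)) <= (Ma * Bb + Ba * Mb) * e.
Proof.
  intros H1 H2 H3 H4 He HMa HBb.
  replace (Cminus (Cmult a' b') (Cmult a b)) with (Cplus (Cmult (Cminus a' a) b') (Cmult a (Cminus b' b))) by ring.
  eapply Rle_trans. apply Cmod_triangle. rewrite !Cmod_mult.
  pose proof (Cmod_ge_0 (Cminus a' a)); pose proof (Cmod_ge_0 b'); pose proof (Cmod_ge_0 a); pose proof (Cmod_ge_0 (Cminus b' b)).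
  apply Rle_trans with (Ma * e * Bb + Ba * (Mb * e)).
  apply Rplus_le_compat; apply Rmult_le_compat; auto.
  right; ring.
Qed.

Lemma radial_inv rho c1 c2 c3 u v s : radial rho ->
  rho (se2_inv_mul (u, v, s) (c1, c2, c3)) = rho (c1 - u, c2 - v, c3 - s).
Proof.
  intros Hr. unfold se2_inv_mul, px, py, pt; cbn [fst snd].
  rewrite <- (Hr _ _ _ s). f_equal. f_equal. pose proof (sin2_cos2 s) as E. unfold Rsqr in E.
  f_equal; [transitivity ((c1 - u) * (sin s * sin s + cos s * cos s))|transitivity ((c2 - v) * (sin s * sin s + cos s * cos s))];
  try ring; rewrite E; ring.
Qed.

Lemma shift_gen L h (phi : R -> C) i : (1 <= L)%nat ->
  (forall x, phi (x + INR L * h) = phi x) ->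
  sC L (fun a => phi ((INR a - INR i) * h)) = sC L (fun a => phi (INR a * h)).
Proof.
  intros HL Hp.
  pose proof (sC_shift L (fun r => phi (r * h)) 0 i HL) as H.
  simpl in H.
  transitivity (sC L (fun a => phi ((INR a + 0 - INR i) * h))).
  { apply sC_ext; intros; f_equal; ring. }
  rewrite H.
  - apply sC_ext; intros; f_equal; ring.
  - intros x. rewrite <- (Hp (x * h)). f_equal. ring.
Qed.

Lemma conv_alg (P Q : R -> R -> R -> C) (X Y : nat -> R) L1 L2 L3 h1 h2 h3 :
  (1 <= L1)%nat -> (1 <= L2)%nat -> (1 <= L3)%nat ->
  (forall x y t, P (x + INR L1 * h1) y t = P x y t) ->
  (forall x y t, P x (y + INR L2 * h2) t = P x y t) ->
  (forall x y t, Q x y (t + INR L3 * h3) = Q x y t) ->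
  sC L1 (fun a1 => sC L2 (fun a2 => sC L3 (fun a3 =>
    sC L1 (fun i => sC L2 (fun j => sC L3 (fun l =>
      Cmult (P ((INR a1 - INR i) * h1) ((INR a2 - INR j) * h2) (INR l * h3))
            (Q (X i) (Y j) ((INR a3 - INR l) * h3))))))))
  = Cmult (sC L1 (fun a1 => sC L2 (fun a2 => sC L3 (fun a3 => P (INR a1 * h1) (INR a2 * h2) (INR a3 * h3)))))
          (sC L1 (fun i => sC L2 (fun j => sC L3 (fun l => Q (X i) (Y j) (INR l * h3))))).
Proof.
  intros HL1 HL2 HL3 HPx HPy HQ.
  set (Rq := fun i j => sC L3 (fun a3 => Q (X i) (Y j) (INR a3 * h3))).
  set (SP := sC L1 (fun a1 => sC L2 (fun a2 => sC L3 (fun a3 => P (INR a1 * h1) (INR a2 * h2) (INR a3 * h3))))).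
  transitivity (sC L1 (fun a1 => sC L2 (fun a2 =>
     sC L1 (fun i => sC L2 (fun j => sC L3 (fun l =>
       Cmult (P ((INR a1 - INR i) * h1) ((INR a2 - INR j) * h2) (INR l * h3)) (Rq i j))))))).
  { apply sC_ext; intros a1 _. apply sC_ext; intros a2 _.
    rewrite sC_swap. apply sC_ext; intros i _.
    rewrite sC_swap. apply sC_ext; intros j _.
    rewrite sC_swap. apply sC_ext; intros l _.
    rewrite sC_mul_l. f_equal. unfold Rq.
    apply (shift_gen L3 h3 (fun t => Q (X i) (Y j) t)); auto. }
  transitivity (sC L1 (fun i => sC L2 (fun j => Cmult SP (Rq i j)))).
  { transitivity (sC L1 (fun a1 => sC L1 (fun i => sC L2 (fun a2 => sC L2 (fun j => sC L3 (fun l =>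
       Cmult (P ((INR a1 - INR i) * h1) ((INR a2 - INR j) * h2) (INR l * h3)) (Rq i j))))))).
    { apply sC_ext; intros a1 _. apply sC_swap. }
    rewrite sC_swap. apply sC_ext; intros i _.
    transitivity (sC L1 (fun a1 => sC L2 (fun j => sC L2 (fun a2 => sC L3 (fun l =>
       Cmult (P ((INR a1 - INR i) * h1) ((INR a2 - INR j) * h2) (INR l * h3)) (Rq i j)))))).
    { apply sC_ext; intros a1 _. apply sC_swap. }
    rewrite sC_swap. apply sC_ext; intros j _.
    transitivity (sC L1 (fun a1 => Cmult (sC L2 (fun a2 => sC L3 (fun l =>
       P ((INR a1 - INR i) * h1) ((INR a2 - INR j) * h2) (INR l * h3)))) (Rq i j))).
    { apply sC_ext; intros a1 _. rewrite <- sC_mul_r. apply sC_ext; intros a2 _.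
      rewrite <- sC_mul_r. reflexivity. }
    rewrite sC_mul_r. f_equal. unfold SP.
    rewrite (shift_gen L1 h1 (fun x => sC L2 (fun a2 => sC L3 (fun l => P x ((INR a2 - INR j) * h2) (INR l * h3))))).
    - apply sC_ext; intros a1 _.
      apply (shift_gen L2 h2 (fun y => sC L3 (fun l => P (INR a1 * h1) y (INR l * h3)))); auto.
      intros; apply sC_ext; intros; apply HPy.
    - auto.
    - intros; apply sC_ext; intros; apply sC_ext; intros; apply HPx. }
  rewrite <- sC_mul_l. apply sC_ext; intros i _. rewrite <- sC_mul_l. reflexivity.
Qed.

Lemma half_shift (g e : R -> C) M (K : nat) :
  (forall x, g (x + 1) = g x) -> Lip1 g M ->
  (forall x y, e (x + y) = Cmult (e x) (e y)) -> (forall x, e (x + 1) = e x) ->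
  (forall x, Cmod (e x) = 1) ->
  1 <= Cmod (Cplus (e (/ INR (2 * K + 1) / 2)) (RtoC 1)) ->
  Cmod (Cminus (sC (2 * K + 1) (fun a => Cmult (g (- / 2 + INR a * / INR (2 * K + 1))) (e (- / 2 + INR a * / INR (2 * K + 1)))))
               (sC (2 * K + 1) (fun a => Cmult (g (INR a * / INR (2 * K + 1))) (e (INR a * / INR (2 * K + 1))))))
  <= 3 / 2 * M.
Proof.
  intros Hg HL He Hep He1 Hkey.
  set (L := (2 * K + 1)%nat) in *.
  assert (HL1 : (1 <= L)%nat) by (unfold L; lia).
  assert (HIL : 0 < INR L) by (apply lt_0_INR; lia).
  set (h := / INR L) in *.
  assert (Hh : 0 < h) by (unfold h; apply Rinv_0_lt_compat; lra).
  assert (ELh : INR L * h = 1) by (unfold h; field; lra).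
  assert (M0 : 0 <= M).
  { pose proof (HL 0 1). pose proof (Cmod_ge_0 (Cminus (g 1) (g 0))). rewrite Rabs_right in H by lra. lra. }
  set (Gf := fun x => Cmult (g x) (e x)).
  assert (HGf : forall x, Gf (x + 1) = Gf x) by (intros; unfold Gf; rewrite Hg, Hep; reflexivity).
  set (A0 := sC L (fun a => Gf (INR a * h))).
  set (Ah := sC L (fun a => Gf (INR a * h + h / 2))).
  assert (C1 : sC L (fun a => Cmult (g (- / 2 + INR a * h)) (e (- / 2 + INR a * h))) = Ah).
  { pose proof (sC_shift L (fun r => Gf (r * h)) (/ 2) (K + 1) HL1) as H.
    transitivity (sC L (fun a => Gf ((INR a + / 2 - INR (K + 1)) * h))).
    { apply sC_ext; intros a _. unfold Gf. f_equal; f_equal; rewrite plus_INR; unfold h, L;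
      rewrite plus_INR, mult_INR; simpl; field; pose proof (pos_INR K); lra. }
    rewrite H.
    - apply sC_ext; intros a _. f_equal. unfold h. field. lra.
    - intros x. replace ((x + INR L) * h) with (x * h + 1) by (rewrite Rmult_plus_distr_r, ELh; ring).
      apply HGf. }
  assert (C2 : Cmult A0 (Cminus (e h) (RtoC 1)) =
               sC L (fun a => Cmult (Cminus (g ((INR a - 1) * h)) (g (INR a * h))) (e (INR a * h)))).
  { set (psi := fun r => Cmult (g ((r - 1) * h)) (e (r * h))).
    pose proof (sC_shift L psi 1 1 HL1) as H.
    assert (Hp : forall x, psi (x + INR L) = psi x).
    { intros x. unfold psi. replace ((x + INR L - 1) * h) with ((x - 1) * h + 1) by (rewrite <- ELh; ring).
      replace ((x + INR L) * h) with (x * h + 1) by (rewrite <- ELh; ring). rewrite Hg, Hep. reflexivity. }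
    specialize (H Hp).
    assert (E1 : Cmult A0 (e h) = sC L (fun a => Cmult (g ((INR a - 1) * h)) (e (INR a * h)))).
    { unfold A0. rewrite <- sC_mul_r.
      transitivity (sC L (fun a => psi (INR a + 1))).
      { apply sC_ext; intros a _. unfold psi, Gf.
        replace ((INR a + 1 - 1) * h) with (INR a * h) by ring.
        replace ((INR a + 1) * h) with (INR a * h + h) by ring. rewrite He. ring. }
      rewrite <- H. apply sC_ext; intros a _. unfold psi. simpl INR. f_equal; f_equal; ring. }
    replace (Cmult A0 (Cminus (e h) (RtoC 1))) with (Cminus (Cmult A0 (e h)) A0) by ring.
    rewrite E1. unfold A0. rewrite <- sC_minus. apply sC_ext; intros a _. unfold Gf. ring. }
  assert (B2 : Cmod (Cmult A0 (Cminus (e h) (RtoC 1))) <= M).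
  { rewrite C2. apply Rle_trans with (INR L * (M * h)).
    2:{ right. transitivity (M * (INR L * h)); [ring|rewrite ELh; ring]. }
    apply sC_norm. intros a _. rewrite Cmod_mult, He1, Rmult_1_r.
    eapply Rle_trans. rewrite <- Cmod_opp. replace (Copp (Cminus (g ((INR a - 1) * h)) (g (INR a * h))))
      with (Cminus (g (INR a * h)) (g ((INR a - 1) * h))) by ring. apply HL.
    right. f_equal. replace (INR a * h - (INR a - 1) * h) with h by ring. apply Rabs_right. lra. }
  assert (B3 : Cmod (Cminus Ah (Cmult (e (h / 2)) A0)) <= M / 2).
  { unfold Ah, A0. rewrite <- sC_mul_l, <- sC_minus.
    apply Rle_trans with (INR L * (M * (h / 2))).
    2:{ right. transitivity (M * (INR L * h) / 2); [field|rewrite ELh; field]. }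
    apply sC_norm. intros a _. unfold Gf. rewrite He.
    replace (Cminus (Cmult (g (INR a * h + h / 2)) (Cmult (e (INR a * h)) (e (h / 2))))
                    (Cmult (e (h / 2)) (Cmult (g (INR a * h)) (e (INR a * h)))))
      with (Cmult (Cminus (g (INR a * h + h / 2)) (g (INR a * h))) (Cmult (e (INR a * h)) (e (h / 2)))) by ring.
    rewrite Cmod_mult, Cmod_mult, !He1, !Rmult_1_r.
    eapply Rle_trans. apply HL. right. f_equal. replace (INR a * h + h / 2 - INR a * h) with (h / 2) by ring.
    apply Rabs_right. lra. }
  assert (Eh : e h = Cmult (e (h / 2)) (e (h / 2))) by (rewrite <- He; f_equal; field).
  assert (B4 : Cmod (Cmult A0 (Cminus (e (h / 2)) (RtoC 1))) <= M).
  { eapply Rle_trans. 2: apply B2.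
    rewrite Eh. replace (Cmult A0 (Cminus (Cmult (e (h / 2)) (e (h / 2))) (RtoC 1)))
      with (Cmult (Cmult A0 (Cminus (e (h / 2)) (RtoC 1))) (Cplus (e (h / 2)) (RtoC 1))) by ring.
    rewrite (Cmod_mult (Cmult A0 (Cminus (e (h / 2)) (RtoC 1))) (Cplus (e (h / 2)) (RtoC 1))).
    pose proof (Cmod_ge_0 (Cmult A0 (Cminus (e (h / 2)) (RtoC 1)))).
    rewrite <- (Rmult_1_r (Cmod (Cmult A0 (Cminus (e (h / 2)) (RtoC 1))))) at 1.
    apply Rmult_le_compat_l; auto. }
  rewrite C1. change (Cmod (Cminus Ah A0) <= 3 / 2 * M).
  replace (Cminus Ah A0) with (Cplus (Cminus Ah (Cmult (e (h / 2)) A0)) (Cmult A0 (Cminus (e (h / 2)) (RtoC 1)))) by ring.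
  eapply Rle_trans. apply Cmod_triangle. lra.
Qed.

Lemma sC3_minus n1 n2 n3 (A B : nat -> nat -> nat -> C) :
  Cminus (sC n1 (fun i => sC n2 (fun j => sC n3 (fun l => A i j l))))
         (sC n1 (fun i => sC n2 (fun j => sC n3 (fun l => B i j l)))) =
  sC n1 (fun i => sC n2 (fun j => sC n3 (fun l => Cminus (A i j l) (B i j l)))).
Proof.
  rewrite <- sC_minus. apply sC_ext; intros. rewrite <- sC_minus. apply sC_ext; intros.
  rewrite <- sC_minus. reflexivity.
Qed.

Lemma sC3_rot n1 n2 n3 (D : nat -> nat -> nat -> C) :
  sC n1 (fun i => sC n2 (fun j => sC n3 (fun l => D i j l))) =
  sC n2 (fun j => sC n3 (fun l => sC n1 (fun i => D i j l))).
Proof.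
  rewrite sC_swap. apply sC_ext; intros. rewrite sC_swap. reflexivity.
Qed.

Lemma sC2_bound n2 n3 (X : nat -> nat -> C) c :
  (forall j l, Cmod (X j l) <= c) -> Cmod (sC n2 (fun j => sC n3 (fun l => X j l))) <= INR n2 * (INR n3 * c).
Proof.
  intros H. apply sC_norm. intros. apply sC_norm. intros. apply H.
Qed.

Definition ex (k : Z * Z * Z) (x : R) : C := Ef k (x, 0, 0).
Definition ey (k : Z * Z * Z) (y : R) : C := Ef k (0, y, 0).

Lemma ex_add k x y : ex k (x + y) = Cmult (ex k x) (ex k y).
Proof. unfold ex. rewrite <- Ef_mult. f_equal. f_equal. f_equal; ring. ring. Qed.
Lemma ey_add k x y : ey k (x + y) = Cmult (ey k x) (ey k y).
Proof. unfold ey. rewrite <- Ef_mult. f_equal. f_equal. f_equal; ring. ring. Qed.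
Lemma ex_per k x : ex k (x + 1) = ex k x.
Proof. unfold ex. apply (Ef_perx k x 0 0 1). Qed.
Lemma ey_per k x : ey k (x + 1) = ey k x.
Proof. unfold ey. apply (Ef_pery k 0 x 0 1). Qed.

Lemma key_cos (a : R) : - (PI / 2) <= a <= PI / 2 -> 1 <= Cmod (Cplus (Cconj (Cmult (cexpi a) (cexpi 0))) (RtoC 1)).
Proof.
  intros Ha. eapply Rle_trans. 2: apply re_le_Cmod.
  unfold cexpi, Cconj, Cmult, Re; simpl. rewrite cos_0, sin_0.
  pose proof (cos_ge_0 a (proj1 Ha) (proj2 Ha)).
  rewrite Rabs_right; lra.
Qed.

Lemma key_ex k (K : nat) : (Z.abs (fst (fst k)) <= Z.of_nat K)%Z ->
  1 <= Cmod (Cplus (ex k (/ INR (2 * K + 1) / 2)) (RtoC 1)).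
Proof.
  intros Hk. unfold ex, Ef, phik, px, py, pt. cbn [fst snd].
  rewrite Rmult_0_r, Rmult_0_r, Rplus_0_r.
  apply key_cos.
  pose proof PI_RGT_0.
  assert (HK : 0 < INR (2 * K + 1)) by (apply lt_0_INR; lia).
  assert (Hk' : Rabs (IZR (fst (fst k))) <= INR K).
  { rewrite <- abs_IZR, INR_IZR_INZ. apply IZR_le. auto. }
  assert (E : INR (2 * K + 1) = 2 * INR K + 1) by (rewrite plus_INR, mult_INR; simpl; ring).
  set (z := IZR (fst (fst k))) in *.
  replace (2 * PI * (z * (/ INR (2 * K + 1) / 2))) with (PI * (z / INR (2 * K + 1))) by (field; lra).
  assert (Hb : Rabs (z / INR (2 * K + 1)) <= / 2).
  { unfold Rdiv. rewrite Rabs_mult, (Rabs_right (/ _)) by (apply Rle_ge, Rlt_le, Rinv_0_lt_compat; lra).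
    apply (Rmult_le_reg_r (INR (2 * K + 1))); auto. rewrite Rmult_assoc, Rinv_l by lra. lra. }
  unfold Rabs in Hb; destruct Rcase_abs in Hb; split; nra.
Qed.

Lemma key_ey k (K : nat) : (Z.abs (snd (fst k)) <= Z.of_nat K)%Z ->
  1 <= Cmod (Cplus (ey k (/ INR (2 * K + 1) / 2)) (RtoC 1)).
Proof.
  intros Hk. unfold ey, Ef, phik, px, py, pt. cbn [fst snd].
  rewrite Rmult_0_r, Rmult_0_r, Rplus_0_l.
  apply key_cos.
  pose proof PI_RGT_0.
  assert (HK : 0 < INR (2 * K + 1)) by (apply lt_0_INR; lia).
  assert (Hk' : Rabs (IZR (snd (fst k))) <= INR K).
  { rewrite <- abs_IZR, INR_IZR_INZ. apply IZR_le. auto. }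
  assert (E : INR (2 * K + 1) = 2 * INR K + 1) by (rewrite plus_INR, mult_INR; simpl; ring).
  set (z := IZR (snd (fst k))) in *.
  replace (2 * PI * (z * (/ INR (2 * K + 1) / 2))) with (PI * (z / INR (2 * K + 1))) by (field; lra).
  assert (Hb : Rabs (z / INR (2 * K + 1)) <= / 2).
  { unfold Rdiv. rewrite Rabs_mult, (Rabs_right (/ _)) by (apply Rle_ge, Rlt_le, Rinv_0_lt_compat; lra).
    apply (Rmult_le_reg_r (INR (2 * K + 1))); auto. rewrite Rmult_assoc, Rinv_l by lra. lra. }
  unfold Rabs in Hb; destruct Rcase_abs in Hb; split; nra.
Qed.

Lemma Ef_split_x k x y t : Ef k (x, y, t) = Cmult (ex k x) (Ef k (0, y, t)).
Proof. unfold ex. rewrite <- Ef_mult. f_equal. f_equal. f_equal; ring. ring. Qed.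
Lemma Ef_split_y k x y t : Ef k (x, y, t) = Cmult (ey k y) (Ef k (x, 0, t)).
Proof. unfold ey. rewrite <- Ef_mult. f_equal. f_equal. f_equal; ring. ring. Qed.

Lemma Cmod_ex k x : Cmod (ex k x) = 1.
Proof. apply Cmod_Ef. Qed.
Lemma Cmod_ey k x : Cmod (ey k x) = 1.
Proof. apply Cmod_Ef. Qed.

Lemma lip_mul_unit (p : R -> C) (E : C) M : Cmod E = 1 ->
  (forall x y, Cmod (Cminus (p y) (p x)) <= M * Rabs (y - x)) ->
  Lip1 (fun x => Cmult (p x) E) M.
Proof.
  intros HE Hp x y. replace (Cminus (Cmult (p y) E) (Cmult (p x) E)) with (Cmult (Cminus (p y) (p x)) E) by ring.
  rewrite Cmod_mult, HE, Rmult_1_r. apply Hp.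
Qed.

Lemma shift3 psi Mp k K1 K2 L3 :
  on_X psi -> LipB psi Mp ->
  (Z.abs (fst (fst k)) <= Z.of_nat K1)%Z -> (Z.abs (snd (fst k)) <= Z.of_nat K2)%Z ->
  Cmod (Cminus
   (sC (2 * K1 + 1) (fun i => sC (2 * K2 + 1) (fun j => sC L3 (fun l =>
      Cmult (psi (gx (2 * K1 + 1) i, gx (2 * K2 + 1) j, gt L3 l)) (Ef k (gx (2 * K1 + 1) i, gx (2 * K2 + 1) j, gt L3 l))))))
   (sC (2 * K1 + 1) (fun i => sC (2 * K2 + 1) (fun j => sC L3 (fun l =>
      Cmult (psi (INR i * / INR (2 * K1 + 1), INR j * / INR (2 * K2 + 1), gt L3 l))
            (Ef k (INR i * / INR (2 * K1 + 1), INR j * / INR (2 * K2 + 1), gt L3 l)))))))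
  <= 3 / 2 * Mp * (INR (2 * K2 + 1) * INR L3 + INR (2 * K1 + 1) * INR L3).
Proof.
  intros [Hp1 _] [M0 [Lx [Ly [Lt B]]]] Hk1 Hk2.
  set (L1 := (2 * K1 + 1)%nat). set (L2 := (2 * K2 + 1)%nat).
  set (Smid := sC L1 (fun i => sC L2 (fun j => sC L3 (fun l =>
      Cmult (psi (INR i * / INR L1, gx L2 j, gt L3 l)) (Ef k (INR i * / INR L1, gx L2 j, gt L3 l)))))).
  match goal with |- Cmod (Cminus ?A ?B) <= _ =>
    replace (Cminus A B) with (Cplus (Cminus A Smid) (Cminus Smid B)) by ring end.
  eapply Rle_trans. apply Cmod_triangle.
  rewrite Rmult_plus_distr_l. apply Rplus_le_compat.
  - unfold Smid. rewrite sC3_minus, sC3_rot.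
    replace (3 / 2 * Mp * (INR L2 * INR L3)) with (INR L2 * (INR L3 * (3 / 2 * Mp))) by ring.
    apply sC2_bound. intros j l. rewrite sC_minus.
    set (g := fun x => Cmult (psi (x, gx L2 j, gt L3 l)) (Ef k (0, gx L2 j, gt L3 l))).
    assert (Hg : forall x, g (x + 1) = g x).
    { intros x. unfold g. f_equal. rewrite <- (Hp1 1%Z 0%Z x (gx L2 j) (gt L3 l)). f_equal. f_equal. f_equal. simpl. ring. }
    assert (HLg : Lip1 g Mp) by (apply lip_mul_unit; [apply Cmod_Ef | intros; apply Lx]).
    pose proof (half_shift g (ex k) Mp K1 Hg HLg (ex_add k) (ex_per k) (Cmod_ex k) (key_ex k K1 Hk1)) as H.
    fold L1 in H.
    eapply Rle_trans; [|apply H]. right. f_equal. f_equal; apply sC_ext; intros a _; unfold g, gx, Rdiv;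
      rewrite Ef_split_x; ring.
  - unfold Smid. rewrite sC3_minus.
    replace (3 / 2 * Mp * (INR L1 * INR L3)) with (INR L1 * (INR L3 * (3 / 2 * Mp))) by ring.
    apply sC_norm. intros i _. rewrite sC_swap.
    apply sC_norm. intros l _. rewrite sC_minus.
    set (g := fun y => Cmult (psi (INR i * / INR L1, y, gt L3 l)) (Ef k (INR i * / INR L1, 0, gt L3 l))).
    assert (Hg : forall y, g (y + 1) = g y).
    { intros y. unfold g. f_equal. rewrite <- (Hp1 0%Z 1%Z (INR i * / INR L1) y (gt L3 l)). f_equal. f_equal. f_equal. simpl. ring. }
    assert (HLg : Lip1 g Mp) by (apply lip_mul_unit; [apply Cmod_Ef | intros; apply Ly]).
    pose proof (half_shift g (ey k) Mp K2 Hg HLg (ey_add k) (ey_per k) (Cmod_ey k) (key_ey k K2 Hk2)) as H.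
    fold L2 in H.
    eapply Rle_trans; [|apply H]. right. f_equal. f_equal; apply sC_ext; intros a _; unfold g, gx, Rdiv;
      rewrite Ef_split_y; ring.
Qed.

Definition Fc (psi rho : SE2 -> C) (c : SE2) (u v s : R) : C :=
  Cmult (psi (u, v, s)) (rho (px c - u, py c - v, pt c - s)).

Definition Dc (psi rho : SE2 -> C) (L1 L2 L3 : nat) (c : SE2) : C :=
  scal (/ (2 * PI)) (scal (/ INR L1 * / INR L2 * (2 * PI / INR L3))
    (sC L1 (fun i => sC L2 (fun j => sC L3 (fun l =>
       Fc psi rho c (px c + / 2 - INR i * / INR L1) (py c + / 2 - INR j * / INR L2) (0 + INR l * (2 * PI / INR L3))))))).

Lemma step1 psi rho Mp Mr L1 L2 L3 :
  LipB psi Mp -> LipB rho Mr -> vanish rho -> radial rho ->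
  (1 <= L1)%nat -> (1 <= L2)%nat -> (1 <= L3)%nat ->
  forall c, Cmod (Cminus (conv psi rho c) (Dc psi rho L1 L2 L3 c))
    <= 2 * Mp * Mr * (/ INR L1 + / INR L2 + 2 * PI / INR L3).
Proof.
  intros [Mp0 [Px [Py [Pt PB]]]] [Mr0 [Rx [Ry [Rt RB]]]] Hv Hr HL1 HL2 HL3 [[c1 c2] c3].
  pose proof PI_RGT_0 as HPI.
  set (F := Fc psi rho (c1, c2, c3)).
  assert (Hu : forall u u' v s, Cmod (Cminus (F u' v s) (F u v s)) <= (Mp * Mr + Mp * Mr) * Rabs (u' - u)).
  { intros. unfold F, Fc, px, py, pt; cbn [fst snd]. apply prod_lip; auto using Rabs_pos.
    eapply Rle_trans. apply Rx. right. f_equal. rewrite <- Rabs_Ropp. f_equal. ring. }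
  assert (Hv' : forall u v v' s, Cmod (Cminus (F u v' s) (F u v s)) <= (Mp * Mr + Mp * Mr) * Rabs (v' - v)).
  { intros. unfold F, Fc, px, py, pt; cbn [fst snd]. apply prod_lip; auto using Rabs_pos.
    eapply Rle_trans. apply Ry. right. f_equal. rewrite <- Rabs_Ropp. f_equal. ring. }
  assert (Hs : forall u v s s', Cmod (Cminus (F u v s') (F u v s)) <= (Mp * Mr + Mp * Mr) * Rabs (s' - s)).
  { intros. unfold F, Fc, px, py, pt; cbn [fst snd]. apply prod_lip; auto using Rabs_pos.
    eapply Rle_trans. apply Rt. right. f_equal. rewrite <- Rabs_Ropp. f_equal. ring. }
  assert (HM : 0 <= Mp * Mr + Mp * Mr) by nra.
  assert (Hz : forall u v s, / 4 < Rabs (c1 - u) \/ / 4 < Rabs (c2 - v) -> F u v s = RtoC 0).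
  { intros u v s H. unfold F, Fc, px, py, pt; cbn [fst snd]. rewrite Hv by auto. ring. }
  assert (Ec : conv psi rho (c1, c2, c3) = int_SE2 (fun h => F (fst (fst h)) (snd (fst h)) (snd h))).
  { unfold conv. apply int_SE2_ext. intros u v s. unfold F, Fc, px, py, pt; cbn [fst snd].
    rewrite radial_inv by auto. reflexivity. }
  rewrite Ec. rewrite (int_SE2_box F _ _ _ c1 c2 HM HM HM Hu Hv' Hs Hz).
  unfold Dc. fold F. unfold px, py, pt; cbn [fst snd].
  rewrite <- scal_minus_C. rewrite Cmod_scal.
  rewrite Rabs_right by (apply Rle_ge, Rlt_le, Rinv_0_lt_compat; lra).
  pose proof (riemann3 F _ _ _ c1 c2 L1 L2 L3 HL1 HL2 HL3 HM HM HM Hu Hv' Hs) as H.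
  apply Rle_trans with (/ (2 * PI) * (2 * PI * ((Mp * Mr + Mp * Mr) * / INR L1 + (Mp * Mr + Mp * Mr) * / INR L2 + (Mp * Mr + Mp * Mr) * (2 * PI / INR L3)))).
  - apply Rmult_le_compat_l. apply Rlt_le, Rinv_0_lt_compat; lra. exact H.
  - assert (0 < INR L1) by (apply lt_0_INR; lia).
    assert (0 < INR L2) by (apply lt_0_INR; lia).
    assert (0 < INR L3) by (apply lt_0_INR; lia).
    right. field. repeat split; lra.
Qed.

Lemma dft_close f g k L1 L2 L3 eps :
  (1 <= L1)%nat -> (1 <= L2)%nat -> (1 <= L3)%nat ->
  (forall c, Cmod (Cminus (f c) (g c)) <= eps) ->
  Cmod (Cminus (dft f k (L1, L2, L3)) (dft g k (L1, L2, L3))) <= eps.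
Proof.
  intros HL1 HL2 HL3 H. rewrite !dft_sC. rewrite <- scal_minus_C, sC3_minus, Cmod_scal.
  assert (HI1 : 0 < INR L1) by (apply lt_0_INR; lia).
  assert (HI2 : 0 < INR L2) by (apply lt_0_INR; lia).
  assert (HI3 : 0 < INR L3) by (apply lt_0_INR; lia).
  rewrite Rabs_right by (apply Rle_ge, Rlt_le, Rinv_0_lt_compat; apply Rmult_lt_0_compat; [apply Rmult_lt_0_compat|]; lra).
  apply Rle_trans with (/ (INR L1 * INR L2 * INR L3) * (INR L1 * (INR L2 * (INR L3 * eps)))).
  - apply Rmult_le_compat_l. apply Rlt_le, Rinv_0_lt_compat; apply Rmult_lt_0_compat; [apply Rmult_lt_0_compat|]; lra.
    apply sC_norm; intros; apply sC_norm; intros; apply sC_norm; intros.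
    replace (Cminus (Cmult (f _) (Ef k _)) (Cmult (g _) (Ef k _))) with
      (Cmult (Cminus (f (gx L1 i, gx L2 i0, gt L3 i1)) (g (gx L1 i, gx L2 i0, gt L3 i1))) (Ef k (gx L1 i, gx L2 i0, gt L3 i1))) by ring.
    rewrite Cmod_mult, Cmod_Ef, Rmult_1_r. apply H.
  - right. field. repeat split; lra.
Qed.

Lemma term_id psi rho k L1 L2 L3 a1 a2 a3 i j l :
  Cmult (Fc psi rho (gx L1 a1, gx L2 a2, gt L3 a3)
           (gx L1 a1 + / 2 - INR i * / INR L1) (gx L2 a2 + / 2 - INR j * / INR L2) (0 + INR l * (2 * PI / INR L3)))
        (Ef k (gx L1 a1, gx L2 a2, gt L3 a3))
  = Cmult (Cmult (psi ((INR a1 - INR i) * / INR L1, (INR a2 - INR j) * / INR L2, INR l * (2 * PI / INR L3)))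
                 (Ef k ((INR a1 - INR i) * / INR L1, (INR a2 - INR j) * / INR L2, INR l * (2 * PI / INR L3))))
          (Cmult (rho (gx L1 i, gx L2 j, (INR a3 - INR l) * (2 * PI / INR L3)))
                 (Ef k (gx L1 i, gx L2 j, (INR a3 - INR l) * (2 * PI / INR L3)))).
Proof.
  unfold Fc, px, py, pt; cbn [fst snd].
  replace (gx L1 a1 + / 2 - INR i * / INR L1) with ((INR a1 - INR i) * / INR L1) by (unfold gx, Rdiv; ring).
  replace (gx L2 a2 + / 2 - INR j * / INR L2) with ((INR a2 - INR j) * / INR L2) by (unfold gx, Rdiv; ring).
  replace (0 + INR l * (2 * PI / INR L3)) with (INR l * (2 * PI / INR L3)) by ring.
  replace (gx L1 a1 - (INR a1 - INR i) * / INR L1) with (gx L1 i) by (unfold gx, Rdiv; ring).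
  replace (gx L2 a2 - (INR a2 - INR j) * / INR L2) with (gx L2 j) by (unfold gx, Rdiv; ring).
  replace (gt L3 a3 - INR l * (2 * PI / INR L3)) with ((INR a3 - INR l) * (2 * PI / INR L3)) by (unfold gt, Rdiv; ring).
  replace (Ef k (gx L1 a1, gx L2 a2, gt L3 a3)) with
    (Cmult (Ef k ((INR a1 - INR i) * / INR L1, (INR a2 - INR j) * / INR L2, INR l * (2 * PI / INR L3)))
           (Ef k (gx L1 i, gx L2 j, (INR a3 - INR l) * (2 * PI / INR L3)))).
  - ring.
  - rewrite <- Ef_mult. f_equal. f_equal. f_equal; unfold gx, Rdiv; ring. unfold gt, Rdiv; ring.
Qed.

Lemma scal_sC3 (h : R) n1 n2 n3 (F : nat -> nat -> nat -> C) :
  scal h (sC n1 (fun a => sC n2 (fun b => sC n3 (fun c => F a b c)))) =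
  sC n1 (fun a => sC n2 (fun b => sC n3 (fun c => scal h (F a b c)))).
Proof.
  rewrite scal_sC. apply sC_ext; intros. rewrite scal_sC. apply sC_ext; intros. rewrite scal_sC. reflexivity.
Qed.

Lemma dft_Dc psi rho k L1 L2 L3 :
  on_X psi -> (forall x y t, rho (x, y, t + 2 * PI) = rho (x, y, t)) ->
  (1 <= L1)%nat -> (1 <= L2)%nat -> (1 <= L3)%nat ->
  dft (Dc psi rho L1 L2 L3) k (L1, L2, L3) =
  Cmult (scal (/ (INR L1 * INR L2 * INR L3)) (sC L1 (fun i => sC L2 (fun j => sC L3 (fun l =>
          Cmult (psi (INR i * / INR L1, INR j * / INR L2, gt L3 l)) (Ef k (INR i * / INR L1, INR j * / INR L2, gt L3 l)))))))
        (dft rho k (L1, L2, L3)).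
Proof.
  intros [Hp1 _] Hr HL1 HL2 HL3.
  pose proof PI_RGT_0 as HPI.
  assert (HI1 : 0 < INR L1) by (apply lt_0_INR; lia).
  assert (HI2 : 0 < INR L2) by (apply lt_0_INR; lia).
  assert (HI3 : 0 < INR L3) by (apply lt_0_INR; lia).
  set (P := fun x y t => Cmult (psi (x, y, t)) (Ef k (x, y, t))).
  set (Q := fun x y t => Cmult (rho (x, y, t)) (Ef k (x, y, t))).
  set (N := INR L1 * INR L2 * INR L3).
  pose proof (conv_alg P Q (gx L1) (gx L2) L1 L2 L3 (/ INR L1) (/ INR L2) (2 * PI / INR L3) HL1 HL2 HL3) as CA.
  rewrite !dft_sC. fold N.
  transitivity (scal (/ N) (sC L1 (fun a1 => sC L2 (fun a2 => sC L3 (fun a3 =>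
    scal (/ N) (sC L1 (fun i => sC L2 (fun j => sC L3 (fun l =>
      Cmult (P ((INR a1 - INR i) * / INR L1) ((INR a2 - INR j) * / INR L2) (INR l * (2 * PI / INR L3)))
            (Q (gx L1 i) (gx L2 j) ((INR a3 - INR l) * (2 * PI / INR L3)))))))))))).
  { f_equal. apply sC_ext; intros a1 _. apply sC_ext; intros a2 _. apply sC_ext; intros a3 _.
    unfold Dc. rewrite <- scal_scal_C.
    replace (/ (2 * PI) * (/ INR L1 * / INR L2 * (2 * PI / INR L3))) with (/ N) by (unfold N; field; repeat split; lra).
    rewrite !scal_C. rewrite <- Cmult_assoc. f_equal.
    rewrite <- sC_mul_r. apply sC_ext; intros i _. rewrite <- sC_mul_r. apply sC_ext; intros j _.
    rewrite <- sC_mul_r. apply sC_ext; intros l _.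
    unfold px, py, pt; cbn [fst snd]. rewrite term_id. reflexivity. }
  rewrite <- scal_sC3. rewrite CA.
  - rewrite !scal_C.
    match goal with |- Cmult _ (Cmult _ (Cmult ?A ?B)) = Cmult (Cmult _ ?A') (Cmult _ ?B') =>
      replace A' with A; [replace B' with B; [ring|] |] end.
    + apply sC_ext; intros i _. apply sC_ext; intros j _. apply sC_ext; intros l _.
      unfold Q. f_equal; f_equal; f_equal; unfold gt, Rdiv; ring.
    + apply sC_ext; intros i _. apply sC_ext; intros j _. apply sC_ext; intros l _.
      unfold P. f_equal; f_equal; f_equal; unfold gt, Rdiv; ring.
  - intros x y t. unfold P. replace (x + INR L1 * / INR L1) with (x + IZR 1) by (simpl; field; lra).
    rewrite Ef_perx. rewrite <- (Hp1 1%Z 0%Z x y t). replace (y + IZR 0) with y by (simpl; ring). reflexivity.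
  - intros x y t. unfold P. replace (y + INR L2 * / INR L2) with (y + IZR 1) by (simpl; field; lra).
    rewrite Ef_pery. rewrite <- (Hp1 0%Z 1%Z x y t). replace (x + IZR 0) with x by (simpl; ring). reflexivity.
  - intros x y t. unfold Q. replace (t + INR L3 * (2 * PI / INR L3)) with (t + 2 * PI) by (field; lra).
    rewrite Ef_pert, Hr. reflexivity.
Qed.

Lemma dft_bound f k L1 L2 L3 B :
  (1 <= L1)%nat -> (1 <= L2)%nat -> (1 <= L3)%nat ->
  (forall c, Cmod (f c) <= B) -> Cmod (dft f k (L1, L2, L3)) <= B.
Proof.
  intros HL1 HL2 HL3 H. rewrite dft_sC, Cmod_scal.
  assert (HI1 : 0 < INR L1) by (apply lt_0_INR; lia).
  assert (HI2 : 0 < INR L2) by (apply lt_0_INR; lia).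
  assert (HI3 : 0 < INR L3) by (apply lt_0_INR; lia).
  rewrite Rabs_right by (apply Rle_ge, Rlt_le, Rinv_0_lt_compat; apply Rmult_lt_0_compat; [apply Rmult_lt_0_compat|]; lra).
  apply Rle_trans with (/ (INR L1 * INR L2 * INR L3) * (INR L1 * (INR L2 * (INR L3 * B)))).
  - apply Rmult_le_compat_l. apply Rlt_le, Rinv_0_lt_compat; apply Rmult_lt_0_compat; [apply Rmult_lt_0_compat|]; lra.
    apply sC_norm; intros; apply sC_norm; intros; apply sC_norm; intros.
    rewrite Cmod_mult, Cmod_Ef, Rmult_1_r. apply H.
  - right. field. repeat split; lra.
Qed.

Theorem mainTheorem8 (psi rho : SE2 -> C) :
  cont_X psi ->
  C1_SE2 (psiOmega psi) ->
  supported_in (psiOmega psi) (Dop (/4)) ->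
  C1_SE2 rho ->
  supported_in rho (Dcl (/4)) ->
  radial rho ->
  exists Cst : R, 0 < Cst /\
    forall (K1 K2 K3 : nat) (k1 k2 k3 : Z),
      (1 <= K1)%nat -> (1 <= K2)%nat -> (1 <= K3)%nat ->
      (Z.abs k1 <= Z.of_nat K1)%Z -> (Z.abs k2 <= Z.of_nat K2)%Z ->
      (Z.abs k3 <= Z.of_nat K3)%Z ->
      let L := (2 * K1 + 1, 2 * K2 + 1, 2 * K3 + 1)%nat in
      let k := (k1, k2, k3) in
      Cmod (Cminus (dft (conv psi rho) k L)
                   (Cmult (dft psi k L) (dft rho k L)))
        <= Cst / INR (Nat.min (Nat.min K1 K2) K3).
Proof.
  intros HX HC HS HCr HSr Hrad.
  pose proof HX as [HoX _].
  destruct (psi_lip psi HoX HC HS) as [Mp HMp].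
  pose proof (vanish_Dcl rho HSr) as Hvr.
  destruct (c1_lip rho HCr Hvr) as [Mr HMr].
  assert (Hrp : forall x y t, rho (x, y, t + 2 * PI) = rho (x, y, t)) by (apply (proj1 HCr)).
  pose proof (proj1 HMp) as Mp0. pose proof (proj1 HMr) as Mr0.
  pose proof (proj2 (proj2 (proj2 (proj2 HMr)))) as BR.
  pose proof PI_RGT_0 as HPI.
  assert (HMF : 0 <= Mp * Mr) by nra.
  exists (2 * Mp * Mr * (2 + 2 * PI) + 3 * Mp * Mr + 1). split; [nra|].
  intros K1 K2 K3 k1 k2 k3 HK1 HK2 HK3 Hk1 Hk2 Hk3. cbv zeta.
  set (k := (k1, k2, k3)).
  set (L1 := (2 * K1 + 1)%nat). set (L2 := (2 * K2 + 1)%nat). set (L3 := (2 * K3 + 1)%nat).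
  assert (HL1 : (1 <= L1)%nat) by (unfold L1; lia).
  assert (HL2 : (1 <= L2)%nat) by (unfold L2; lia).
  assert (HL3 : (1 <= L3)%nat) by (unfold L3; lia).
  assert (HI1 : 0 < INR L1) by (apply lt_0_INR; lia).
  assert (HI2 : 0 < INR L2) by (apply lt_0_INR; lia).
  assert (HI3 : 0 < INR L3) by (apply lt_0_INR; lia).
  set (m := Nat.min (Nat.min K1 K2) K3).
  assert (Hm : (1 <= m)%nat) by (unfold m; lia).
  assert (HIm : 0 < INR m) by (apply lt_0_INR; lia).
  assert (Hinv : forall Li : nat, (m <= Li)%nat -> / INR Li <= / INR m).
  { intros Li HLi. apply Rinv_le_contravar; auto. apply le_INR; auto. }
  assert (H1 : / INR L1 <= / INR m) by (apply Hinv; unfold L1, m; lia).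
  assert (H2 : / INR L2 <= / INR m) by (apply Hinv; unfold L2, m; lia).
  assert (H3 : / INR L3 <= / INR m) by (apply Hinv; unfold L3, m; lia).
  pose proof (dft_close (conv psi rho) (Dc psi rho L1 L2 L3) k L1 L2 L3 _ HL1 HL2 HL3
                (step1 psi rho Mp Mr L1 L2 L3 HMp HMr Hvr Hrad HL1 HL2 HL3)) as PA.
  rewrite (dft_Dc psi rho k L1 L2 L3 HoX Hrp HL1 HL2 HL3) in PA.
  pose proof (shift3 psi Mp k K1 K2 L3 HoX HMp Hk1 Hk2) as PB. fold L1 L2 in PB.
  set (S00 := sC L1 (fun i => sC L2 (fun j => sC L3 (fun l =>
          Cmult (psi (INR i * / INR L1, INR j * / INR L2, gt L3 l)) (Ef k (INR i * / INR L1, INR j * / INR L2, gt L3 l)))))) in *.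
  set (N := INR L1 * INR L2 * INR L3) in *.
  assert (HN : 0 < N) by (unfold N; apply Rmult_lt_0_compat; [apply Rmult_lt_0_compat|]; lra).
  assert (Hdr : Cmod (dft rho k (L1, L2, L3)) <= Mr) by (apply dft_bound; auto; intros [[x y] t]; apply BR).
  assert (Hdiff : Cmod (Cminus (dft psi k (L1, L2, L3)) (scal (/ N) S00)) <= 3 / 2 * Mp * (/ INR L1 + / INR L2)).
  { rewrite dft_sC. fold N. rewrite <- scal_minus_C, Cmod_scal.
    rewrite Rabs_right by (apply Rle_ge, Rlt_le, Rinv_0_lt_compat; lra).
    eapply Rle_trans. apply Rmult_le_compat_l. apply Rlt_le, Rinv_0_lt_compat; lra. apply PB.
    right. unfold N. field. repeat split; lra. }
  match goal with |- Cmod (Cminus ?A (Cmult ?B ?R)) <= _ =>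
    replace (Cminus A (Cmult B R)) with
      (Cplus (Cminus A (Cmult (scal (/ N) S00) R)) (Cmult (Cminus (scal (/ N) S00) B) R)) by ring end.
  eapply Rle_trans. apply Cmod_triangle. rewrite Cmod_mult.
  rewrite <- Cmod_opp in Hdiff.
  replace (Copp (Cminus (dft psi k (L1, L2, L3)) (scal (/ N) S00))) with
     (Cminus (scal (/ N) S00) (dft psi k (L1, L2, L3))) in Hdiff by ring.
  pose proof (Cmod_ge_0 (Cminus (scal (/ N) S00) (dft psi k (L1, L2, L3)))) as G1.
  pose proof (Cmod_ge_0 (dft rho k (L1, L2, L3))) as G2.
  apply Rle_trans with (2 * Mp * Mr * (/ INR L1 + / INR L2 + 2 * PI / INR L3) +
                        3 / 2 * Mp * (/ INR L1 + / INR L2) * Mr).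
  { apply Rplus_le_compat. exact PA. apply Rmult_le_compat; auto. }
  unfold Rdiv. rewrite (Rmult_comm (2 * PI) (/ INR L3)).
  apply Rle_trans with ((2 * Mp * Mr * (2 + 2 * PI) + 3 * Mp * Mr) * / INR m).
  - assert (0 < / INR m) by (apply Rinv_0_lt_compat; lra).
    assert (0 <= / INR L1) by (apply Rlt_le, Rinv_0_lt_compat; lra).
    assert (0 <= / INR L2) by (apply Rlt_le, Rinv_0_lt_compat; lra).
    assert (0 <= / INR L3) by (apply Rlt_le, Rinv_0_lt_compat; lra).
    assert (2 * Mp * Mr * / INR L1 <= 2 * Mp * Mr * / INR m) by (apply Rmult_le_compat_l; nra).
    assert (2 * Mp * Mr * / INR L2 <= 2 * Mp * Mr * / INR m) by (apply Rmult_le_compat_l; nra).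
    assert (2 * Mp * Mr * (2 * PI) * / INR L3 <= 2 * Mp * Mr * (2 * PI) * / INR m) by (apply Rmult_le_compat_l; nra).
    assert (3 / 2 * Mp * Mr * / INR L1 <= 3 / 2 * Mp * Mr * / INR m) by (apply Rmult_le_compat_l; nra).
    assert (3 / 2 * Mp * Mr * / INR L2 <= 3 / 2 * Mp * Mr * / INR m) by (apply Rmult_le_compat_l; nra).
    nra.
  - apply Rmult_le_compat_r. apply Rlt_le, Rinv_0_lt_compat; lra. lra.
Qed.
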